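(* $\rho_\mu(t)$ is a continuous function of $(t,s,r,\epsilon)\in[0,\infty)\times[0,\infty)\times\mathcal{I}\times[0,\epsilon_0]$, where $\mu=(s,r,\epsilon)$, and $\rho_\mu'(t)$ and $\rho_\mu''(t)$ are continuous functions on $\big(([0,\infty)\times[0,\infty))\setminus\{(0,0)\}\big)\times\mathcal{I}\times[0,\epsilon_0]$ (the first two coordinates being $(t,s)$).
   Context: Fix $\varphi\in C^\infty(\mathbb{R})$ with $0\le\varphi\le1$, $\varphi(x)=0$ for $x\le0$, $\varphi(x)=1$ for $x\ge1$, and let $H$ be the Heaviside function ($H(x)=1$ for $x>0$, $H(x)=0$ for $x\le0$). For $r>0$, $\epsilon\ge0$ with $r+\epsilon<\pi/2$ and $\rho\ge0$ set $K^\parallel_{r,\epsilon}(\rho)=1-2\varphi((\rho-r)/\epsilon)$ if $\epsilon>0$ and $K^\parallel_{r,0}(\rho)=1-2H(\rho-r)$. Let $\mathcal{A}_{r,\epsilon}$ solve $\mathcal{A}''+K^\parallel_{r,\epsilon}\mathcal{A}=0$, $\mathcal{A}(0)=0$, $\mathcal{A}'(0)=1$ (for $\epsilon=0$: the unique $C^1$ function with these initial values solving the equation on $\rho\ne r$). For $\mu=(s,r,\epsilon)$, $\rho_\mu(t)$ ($t\ge0$) is, for $s>0$, the solution of $\rho''=\frac{\mathcal{A}_{r,\epsilon}'(\rho)}{\mathcal{A}_{r,\epsilon}(\rho)}(1-(\rho')^2)$, $\rho(0)=s$, $\rho'(0)=0$, and $\rho_{0,r,\epsilon}(t)=t$. Fixed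 small constants $\eta,\epsilon_0>0$ are chosen and $\mathcal{I}=[\pi/4-\eta,\pi/4+\eta]$. *)

(* Defs.v *)
From Stdlib Require Import Reals Lra.
Open Scope R_scope.

Definition smooth (f : R -> R) : Prop :=
  exists D : nat -> R -> R, D O = f /\
    forall (n : nat) (x : R), derivable_pt_lim (D n) x (D (S n) x).

Definition Heav (x : R) : R := if Rle_dec x 0 then 0 else 1.

Definition Kpar (phi : R -> R) (r eps x : R) : R :=
  if Req_EM_T eps 0 then 1 - 2 * Heav (x - r)
  else 1 - 2 * phi ((x - r) / eps).

(* A (with derivative dA) is the solution A'' + K A = 0, A(0)=0, A'(0)=1;
   for eps = 0: A is C^1 and solves the equation away from x = r. *)
Definition is_A (phi : R -> R) (r eps : R) (A dA : R -> R) : Prop :=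
  A 0 = 0 /\ dA 0 = 1 /\
  (forall x, derivable_pt_lim A x (dA x)) /\
  (forall x, continuity_pt dA x) /\
  (forall x, (0 < eps \/ x <> r) ->
     derivable_pt_lim dA x (- (Kpar phi r eps x * A x))).

Definition is_rho (A dA : R -> R) (s : R) (rho drho ddrho : R -> R) : Prop :=
  (forall t, 0 <= t -> derivable_pt_lim rho t (drho t)) /\
  (forall t, 0 <= t -> derivable_pt_lim drho t (ddrho t)) /\
  (0 < s ->
     rho 0 = s /\ drho 0 = 0 /\
     forall t, 0 <= t ->
       ddrho t = dA (rho t) / A (rho t) * (1 - (drho t) ^ 2)) /\
  (s = 0 -> forall t, rho t = t).

Definition cont4_on (D : R -> R -> R -> R -> Prop) (f : R -> R -> R -> R -> R) : Prop :=
  forall t s r e, D t s r e ->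
    forall eps, 0 < eps -> exists del, 0 < del /\
      forall t' s' r' e', D t' s' r' e' ->
        Rabs (t' - t) < del -> Rabs (s' - s) < del ->
        Rabs (r' - r) < del -> Rabs (e' - e) < del ->
        Rabs (f t' s' r' e' - f t s r e) < eps.

Definition Dom1 (eta eps0 : R) (t s r e : R) : Prop :=
  0 <= t /\ 0 <= s /\ PI / 4 - eta <= r <= PI / 4 + eta /\ 0 <= e <= eps0.

Definition Dom2 (eta eps0 : R) (t s r e : R) : Prop :=
  Dom1 eta eps0 t s r e /\ ~ (t = 0 /\ s = 0).

(* Main.v *)
Require Import Defs.
From Stdlib Require Import Reals Lra List Classical FunctionalExtensionality.
From Coquelicot Require Import Coquelicot.
Open Scope R_scope.

Lemma dcont f x l : derivable_pt_lim f x l -> continuity_pt f x.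
Proof. intro H. apply derivable_continuous_pt. exists l. exact H. Qed.

Lemma mvt_pos f df a b : a < b -> (forall x, a <= x <= b -> continuity_pt f x) ->
  (forall x, a < x < b -> derivable_pt_lim f x (df x)) ->
  exists c, a < c < b /\ f b - f a = df c * (b - a).
Proof.
  intros ab Hc Hd.
  assert (pr1 : forall c, a < c < b -> derivable_pt f c).
  { intros c Hc'. exists (df c). apply Hd; auto. }
  destruct (MVT f id a b pr1 (fun c _ => derivable_pt_id c) ab Hc
     (fun c _ => derivable_continuous_pt _ _ (derivable_pt_id c))) as [c [P HP]].
  exists c. split; auto. rewrite derive_pt_id in HP.
  rewrite (derive_pt_eq_0 f c (df c) (pr1 c P) (Hd c P)) in HP. unfold id in HP. lra.
Qed.

Lemma nonincr_fin (l : list R) : forall f df a b, a <= b ->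
  (forall x, a <= x <= b -> continuity_pt f x) ->
  (forall x, a < x < b -> ~ In x l -> derivable_pt_lim f x (df x) /\ df x <= 0) ->
  f b <= f a.
Proof.
  induction l as [|c l IH]; intros f df a b ab Hc Hd.
  - destruct (Req_dec a b) as [->|nab]; [lra|].
    destruct (mvt_pos f df a b) as [c [Hc1 Hc2]]; try lra; auto.
    + intros x Hx. apply (Hd x Hx). simpl; auto.
    + destruct (Hd c Hc1) as [_ H]; [simpl; auto|]. nra.
  - destruct (Rlt_dec a c) as [ac|ac]; [destruct (Rlt_dec c b) as [cb|cb]|].
    + assert (f c <= f a).
      { apply (IH f df a c); try lra. intros; apply Hc; lra.
        intros x Hx Hn. apply Hd. lra. simpl. intros [E|E]; [lra|auto]. }
      assert (f b <= f c).
      { apply (IH f df c b); try lra. intros; apply Hc; lra.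
        intros x Hx Hn. apply Hd. lra. simpl. intros [E|E]; [lra|auto]. }
      lra.
    + apply (IH f df a b); auto. intros x Hx Hn. apply Hd; auto. simpl. intros [E|E]; [lra|auto].
    + apply (IH f df a b); auto. intros x Hx Hn. apply Hd; auto. simpl. intros [E|E]; [lra|auto].
Qed.

Lemma cont_lin k : forall x, continuity_pt (fun y => k * y) x.
Proof. intro x. apply (dcont _ _ (k*1)). apply derivable_pt_lim_scal, derivable_pt_lim_id. Qed.

Lemma upper_fin (l : list R) f df a b k : a <= b ->
  (forall x, a <= x <= b -> continuity_pt f x) ->
  (forall x, a < x < b -> ~ In x l -> derivable_pt_lim f x (df x) /\ df x <= k) ->
  f b - f a <= k * (b - a).
Proof.
  intros ab Hc Hd.
  assert (H := nonincr_fin l (fun x => f x - k * x) (fun x => df x - k) a b ab).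
  simpl in H. enough (f b - k * b <= f a - k * a) by lra. apply H.
  - intros x Hx. apply continuity_pt_minus. auto. apply cont_lin.
  - intros x Hx Hn. destruct (Hd x Hx Hn) as [D1 D2]. split; [|lra].
    replace (df x - k) with (df x - k * 1) by ring.
    apply derivable_pt_lim_minus; auto. apply derivable_pt_lim_scal, derivable_pt_lim_id.
Qed.

Lemma lower_fin (l : list R) f df a b k : a <= b ->
  (forall x, a <= x <= b -> continuity_pt f x) ->
  (forall x, a < x < b -> ~ In x l -> derivable_pt_lim f x (df x) /\ k <= df x) ->
  k * (b - a) <= f b - f a.
Proof.
  intros ab Hc Hd.
  assert (H := upper_fin l (fun x => - f x) (fun x => - df x) a b (-k) ab).
  simpl in H. enough (- f b - - f a <= - k * (b - a)) by lra. apply H.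
  - intros x Hx. apply continuity_pt_opp. auto.
  - intros x Hx Hn. destruct (Hd x Hx Hn) as [D1 D2]. split; [|lra].
    apply derivable_pt_lim_opp; auto.
Qed.

Lemma lip_fin (l : list R) f df a b k : a <= b ->
  (forall x, a <= x <= b -> continuity_pt f x) ->
  (forall x, a < x < b -> ~ In x l -> derivable_pt_lim f x (df x) /\ Rabs (df x) <= k) ->
  Rabs (f b - f a) <= k * (b - a).
Proof.
  intros ab Hc Hd. apply Rabs_le. split.
  - assert (H := lower_fin l f df a b (-k) ab Hc). enough (-k*(b-a) <= f b - f a) by lra.
    apply H. intros x Hx Hn. destruct (Hd x Hx Hn) as [D1 D2]. split; auto.
    apply Rabs_le_between in D2; lra.
  - apply (upper_fin l f df a b k ab Hc). intros x Hx Hn. destruct (Hd x Hx Hn) as [D1 D2]. split; auto.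
    apply Rabs_le_between in D2; lra.
Qed.

Lemma exp_le_mono x y : x <= y -> exp x <= exp y.
Proof. intros [H|H]; [left; apply exp_increasing; auto | rewrite H; lra]. Qed.

Lemma dexp_lin C a x : derivable_pt_lim (fun y => exp (- C * (y - a))) x (exp (- C * (x - a)) * (- C)).
Proof.
  apply is_derive_Reals. auto_derive; auto. replace (x + - a) with (x - a) by ring. ring.
Qed.

Lemma dlin k a x : derivable_pt_lim (fun y => k * (y - a)) x k.
Proof. apply is_derive_Reals. auto_derive; auto. ring. Qed.

Lemma gron (l : list R) E dE a b C k : a <= b -> 0 <= C -> 0 <= k ->
  (forall x, a <= x <= b -> continuity_pt E x) ->
  (forall x, a < x < b -> ~ In x l -> derivable_pt_lim E x (dE x) /\ dE x <= C * E x + k) ->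
  E b <= (E a + k * (b - a)) * exp (C * (b - a)).
Proof.
  intros ab HC Hk Hc Hd.
  assert (H := nonincr_fin l (fun x => E x * exp (- C * (x - a)) - k * (x - a))
     (fun x => dE x * exp (- C * (x - a)) + E x * (exp (- C * (x - a)) * (- C)) - k) a b ab).
  simpl in H. 
  assert (Hb : E b * exp (- C * (b - a)) - k * (b - a) <= E a * exp (- C * (a - a)) - k * (a - a)).
  { apply H.
    - intros x Hx. apply continuity_pt_minus. apply continuity_pt_mult. auto.
      apply (dcont _ _ _ (dexp_lin C a x)).
      apply (dcont _ _ _ (dlin k a x)).
    - intros x Hx Hn. destruct (Hd x Hx Hn) as [D1 D2]. split.
      + apply derivable_pt_lim_minus. apply (derivable_pt_lim_mult E (fun y => exp (- C * (y - a)))). auto.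
        apply dexp_lin. apply dlin.
      + assert (exp (- C * (x - a)) <= 1). { rewrite <- exp_0. apply exp_le_mono. nra. }
        assert (0 < exp (- C * (x - a))) by apply exp_pos.
        nra. }
  replace (a - a) with 0 in Hb by ring. rewrite Rmult_0_r, exp_0 in Hb.
  assert (Hp : exp (- C * (b - a)) * exp (C * (b - a)) = 1).
  { rewrite <- exp_plus. replace (- C * (b - a) + C * (b - a)) with 0 by ring. apply exp_0. }
  assert (0 < exp (C * (b - a))) by apply exp_pos.
  replace (E b) with (E b * exp (- C * (b - a)) * exp (C * (b - a))) by (rewrite Rmult_assoc, Hp; ring).
  apply Rmult_le_compat_r; lra.
Qed.

Lemma cont_pos f x : continuity_pt f x -> 0 < f x ->
  exists d, 0 < d /\ forall y, Rabs (y - x) < d -> 0 < f y.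
Proof.
  intros Hc Hp. unfold continuity_pt, continue_in, limit1_in, limit_in in Hc.
  destruct (Hc (f x) Hp) as [d [Hd H]]. exists d. split; auto.
  intros y Hy. destruct (Req_dec x y) as [<-|nxy]; auto.
  assert (H1 := H y (conj (conj I nxy) Hy)). simpl in H1. unfold R_dist in H1.
  apply Rabs_lt_between in H1. lra.
Qed.

Lemma cont_ind f a b : a <= b -> (forall x, a <= x <= b -> continuity_pt f x) -> 0 < f a ->
  (forall y, a < y <= b -> (forall x, a <= x < y -> 0 < f x) -> 0 < f y) ->
  forall x, a <= x <= b -> 0 < f x.
Proof.
  intros ab Hc Ha Hstep x0 Hx0.
  destruct (Rlt_le_dec 0 (f x0)) as [P|N]; auto. exfalso.
  set (S := fun y => a <= y <= x0 /\ forall z, a <= z <= y -> 0 < f z).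
  assert (Sb : bound S). { exists x0. intros y [Hy _]. lra. }
  assert (Sa : S a). { split; [lra|]. intros z Hz. replace z with a by lra. auto. }
  destruct (completeness S Sb (ex_intro _ a Sa)) as [m [Hub Hlub]].
  assert (am : a <= m) by (apply Hub; auto).
  assert (mx : m <= x0). { apply Hlub. intros y [Hy _]. lra. }
  assert (below : forall z, a <= z < m -> 0 < f z).
  { intros z Hz. destruct (Rlt_le_dec z a) as [?|za]; [lra|].
    destruct (classic (exists y, S y /\ z <= y)) as [[y [[_ Hy] zy]]|nE].
    - apply Hy; lra.
    - assert (m <= z). { apply Hlub. intros y Sy. destruct (Rle_dec y z); auto.
        exfalso; apply nE; exists y; split; auto; lra. }
      lra. }
  destruct (Rlt_le_dec 0 (f m)) as [Pm|Nm].
  - destruct (Req_dec m x0) as [E|E]; [subst; lra|].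
    destruct (cont_pos f m (Hc m ltac:(lra)) Pm) as [d [Hd Hp]].
    set (y := Rmin (m + d/2) x0).
    assert (Sy : S y).
    { unfold y; split. split; [|apply Rmin_r]. apply Rmin_glb; lra.
      intros z Hz. destruct (Rlt_le_dec z m). apply below; lra.
      apply Hp. assert (z <= m + d/2) by (eapply Rle_trans; [apply Hz|apply Rmin_l]).
      apply Rabs_lt_between; lra. }
    assert (y <= m) by (apply Hub; auto). unfold y in H.
    unfold Rmin in H. destruct (Rle_dec (m + d/2) x0); lra.
  - destruct (Req_dec m a) as [E|E]; [subst; lra|].
    assert (0 < f m) by (apply Hstep; [lra|auto]). lra.
Qed.

Lemma deq f x l1 l2 : derivable_pt_lim f x l1 -> l1 = l2 -> derivable_pt_lim f x l2.
Proof. intros H ->; auto. Qed.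
Lemma dadd f g x df dg : derivable_pt_lim f x df -> derivable_pt_lim g x dg ->
  derivable_pt_lim (fun y => f y + g y) x (df + dg).
Proof. intros; apply (derivable_pt_lim_plus f g); auto. Qed.
Lemma dsub f g x df dg : derivable_pt_lim f x df -> derivable_pt_lim g x dg ->
  derivable_pt_lim (fun y => f y - g y) x (df - dg).
Proof. intros; apply (derivable_pt_lim_minus f g); auto. Qed.
Lemma dmul f g x df dg : derivable_pt_lim f x df -> derivable_pt_lim g x dg ->
  derivable_pt_lim (fun y => f y * g y) x (df * g x + f x * dg).
Proof. intros; apply (derivable_pt_lim_mult f g); auto. Qed.
Lemma dcst c x : derivable_pt_lim (fun _ => c) x 0.
Proof. apply derivable_pt_lim_const. Qed.
Lemma did x : derivable_pt_lim (fun y => y) x 1.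
Proof. apply derivable_pt_lim_id. Qed.
Lemma dsin x : derivable_pt_lim (fun y => sin y) x (cos x).
Proof. apply derivable_pt_lim_sin. Qed.
Lemma dcos x : derivable_pt_lim (fun y => cos y) x (- sin x).
Proof. apply derivable_pt_lim_cos. Qed.
Lemma dexp x : derivable_pt_lim (fun y => exp y) x (exp x).
Proof. apply derivable_pt_lim_exp. Qed.
Lemma dcomp f g x dg df : derivable_pt_lim g x dg -> derivable_pt_lim f (g x) df ->
  derivable_pt_lim (fun y => f (g y)) x (df * dg).
Proof. intros; apply (derivable_pt_lim_comp g f); auto. Qed.

Ltac dtac := first [ apply dsub | apply dmul | apply dadd | apply dcst | apply did
  | apply dsin | apply dcos | apply dexp | eassumption ].
Ltac dsolve := eapply deq; [repeat dtac | cbv beta].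

Lemma ddiv f g x df dg : derivable_pt_lim f x df -> derivable_pt_lim g x dg -> g x <> 0 ->
  derivable_pt_lim (fun y => f y / g y) x ((df * g x - dg * f x) / (g x)²).
Proof. intros; apply (derivable_pt_lim_div f g); auto. Qed.

Lemma cadd f g x : continuity_pt f x -> continuity_pt g x -> continuity_pt (fun y => f y + g y) x.
Proof. intros; apply (continuity_pt_plus f g); auto. Qed.
Lemma csub f g x : continuity_pt f x -> continuity_pt g x -> continuity_pt (fun y => f y - g y) x.
Proof. intros; apply (continuity_pt_minus f g); auto. Qed.
Lemma cmul f g x : continuity_pt f x -> continuity_pt g x -> continuity_pt (fun y => f y * g y) x.
Proof. intros; apply (continuity_pt_mult f g); auto. Qed.
Lemma cdiv f g x : continuity_pt f x -> continuity_pt g x -> g x <> 0 -> continuity_pt (fun y => f y / g y) x.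
Proof. intros; apply (continuity_pt_div f g); auto. Qed.
Lemma ccst c x : continuity_pt (fun _ => c) x.
Proof. apply continuity_pt_const. intros a b; auto. Qed.
Lemma cid x : continuity_pt (fun y => y) x.
Proof. apply derivable_continuous_pt, derivable_pt_id. Qed.
Lemma csin x : continuity_pt (fun y => sin y) x.
Proof. apply continuity_sin. Qed.
Lemma ccos x : continuity_pt (fun y => cos y) x.
Proof. apply continuity_cos. Qed.
Lemma cexp x : continuity_pt (fun y => exp y) x.
Proof. apply derivable_continuous_pt, derivable_pt_exp. Qed.
Lemma ccomp f g x : continuity_pt g x -> continuity_pt f (g x) -> continuity_pt (fun y => f (g y)) x.
Proof. intros; apply (continuity_pt_comp g f); auto. Qed.

Ltac ctac := first [ apply csub | apply cmul | apply cadd | apply ccst | apply cid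
  | apply csin | apply ccos | apply cexp | assumption ].

Definition phiok (phi : R -> R) := (forall x, 0 <= phi x <= 1) /\
  (forall x, x <= 0 -> phi x = 0) /\ (forall x, 1 <= x -> phi x = 1).
Definition parok r e := 0 < r /\ 0 <= e /\ r + e < PI / 2.

Lemma K_bound phi r e x : phiok phi -> -1 <= Kpar phi r e x <= 1.
Proof.
  intros [Hb _]. unfold Kpar, Heav. destruct (Req_EM_T e 0).
  destruct (Rle_dec (x - r) 0); lra. specialize (Hb ((x - r) / e)); lra.
Qed.

Lemma K_left phi r e x : phiok phi -> 0 <= e -> x <= r -> Kpar phi r e x = 1.
Proof.
  intros [_ [H0 _]] He xr. unfold Kpar, Heav. destruct (Req_EM_T e 0).
  destruct (Rle_dec (x - r) 0); lra. rewrite H0. ring.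
  assert (0 < / e) by (apply Rinv_0_lt_compat; lra). unfold Rdiv; nra.
Qed.

Lemma K_right phi r e x : phiok phi -> 0 <= e -> r + e <= x -> r < x -> Kpar phi r e x = -1.
Proof.
  intros [_ [_ H1]] He xr xr'. unfold Kpar, Heav. destruct (Req_EM_T e 0).
  destruct (Rle_dec (x - r) 0); lra. rewrite H1. ring.
  assert (0 < / e) by (apply Rinv_0_lt_compat; lra).
  assert ((x - r) / e - 1 = (x - r - e) * / e) by (field; lra). unfold Rdiv in *. nra.
Qed.

Lemma A_cont phi r e A dA x : is_A phi r e A dA -> continuity_pt A x.
Proof. intros [_ [_ [H _]]]. apply (dcont _ _ _ (H x)). Qed.
Lemma dA_cont phi r e A dA x : is_A phi r e A dA -> continuity_pt dA x.
Proof. intros [_ [_ [_ [H _]]]]. apply H. Qed.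

Lemma A_sin phi r e A dA : phiok phi -> parok r e -> is_A phi r e A dA ->
  forall x, 0 <= x <= r -> A x = sin x /\ dA x = cos x.
Proof.
  intros Hp Hpar HA x Hx. pose proof HA as [A0 [dA0 [DA [CdA DdA]]]].
  set (E := fun y => (A y - sin y) * (A y - sin y) + (dA y - cos y) * (dA y - cos y)).
  assert (H := upper_fin nil E (fun _ => 0) 0 x 0 (proj1 Hx)).
  assert (E x - E 0 <= 0 * (x - 0)).
  { apply H.
    - intros y Hy. unfold E. pose proof (A_cont _ _ _ _ _ y HA). pose proof (CdA y). repeat ctac.
    - intros y Hy _. split; [|lra]. pose proof (DA y) as D1.
      assert (D2 := DdA y ltac:(right; lra)). rewrite (K_left phi r e y Hp) in D2 by (destruct Hpar as [? [? ?]]; lra).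
      unfold E. dsolve. ring. }
  unfold E in H0. rewrite Rmult_0_l in H0. rewrite A0, dA0, sin_0, cos_0 in H0.
  pose proof (Rle_0_sqr (A x - sin x)) as Q1. pose proof (Rle_0_sqr (dA x - cos x)) as Q2. unfold Rsqr in Q1, Q2.
  assert (Z1 : (A x - sin x) * (A x - sin x) = 0) by lra.
  assert (Z2 : (dA x - cos x) * (dA x - cos x) = 0) by lra.
  apply Rmult_integral in Z1. apply Rmult_integral in Z2. split; destruct Z1, Z2; lra.
Qed.

Lemma sin_pos_h x : 0 < x -> x < PI / 2 -> 0 < sin x.
Proof. intros. apply sin_gt_0; lra. Qed.
Lemma cos_pos_h x : 0 <= x -> x < PI / 2 -> 0 < cos x.
Proof. intros. apply cos_gt_0. pose proof PI_RGT_0. lra. auto. Qed.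

Lemma sturm phi r e A dA : phiok phi -> parok r e -> is_A phi r e A dA ->
  forall y, r <= y < PI / 2 -> (forall z, r <= z < y -> 0 < A z) ->
  sin y <= A y /\ cos y * A y <= sin y * dA y.
Proof.
  intros Hp Hpar HA y Hy Hpos. pose proof HA as [A0 [dA0 [DA [CdA DdA]]]].
  destruct Hpar as [r0 [e0 re]].
  set (W := fun z => dA z * sin z - A z * cos z).
  assert (HW : forall z, 0 <= z <= y -> 0 <= W z).
  { intros z Hz.
    assert (H := lower_fin (r :: nil) W (fun z => A z * sin z * (1 - Kpar phi r e z)) 0 z 0 (proj1 Hz)).
    assert (0 * (z - 0) <= W z - W 0).
    { apply H.
      - intros t Ht. unfold W. pose proof (A_cont _ _ _ _ _ t HA). pose proof (CdA t). repeat ctac.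
      - intros t Ht Hn. assert (tr : t <> r) by (intro; apply Hn; simpl; auto).
        pose proof (DA t) as D1. assert (D2 := DdA t (or_intror tr)). split.
        + unfold W. dsolve. ring.
        + pose proof (K_bound phi r e t Hp).
          assert (0 < sin t) by (apply sin_pos_h; lra).
          assert (0 <= A t).
          { destruct (Rle_dec t r). rewrite (proj1 (A_sin phi r e A dA Hp (conj r0 (conj e0 re)) HA t ltac:(lra))). lra.
            left; apply Hpos; lra. }
          apply Rmult_le_pos. apply Rmult_le_pos; lra. lra. }
    unfold W in H0 |- *. rewrite A0, dA0, sin_0, cos_0 in H0. lra. }
  split.
  - destruct (Req_dec y r) as [E|E].
    + subst. rewrite (proj1 (A_sin phi r e A dA Hp (conj r0 (conj e0 re)) HA r ltac:(lra))). lra.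
    + set (q := fun z => A z / sin z).
      assert (H := lower_fin nil q (fun z => (dA z * sin z - cos z * A z) / (sin z)²) r y 0 ltac:(lra)).
      assert (0 * (y - r) <= q y - q r).
      { apply H.
        - intros t Ht. unfold q. apply cdiv. apply (A_cont _ _ _ _ _ t HA). apply csin.
          assert (0 < sin t) by (apply sin_pos_h; lra). lra.
        - intros t Ht _. split.
          + unfold q. apply ddiv. apply DA. apply dsin. assert (0 < sin t) by (apply sin_pos_h; lra). lra.
          + assert (0 < sin t) by (apply sin_pos_h; lra).
            assert (0 < (sin t)²) by (unfold Rsqr; nra).
            assert (0 <= W t) by (apply HW; lra). unfold W in H2.
            apply Rcomplements.Rdiv_le_0_compat; lra. }
      unfold q in H0. rewrite (proj1 (A_sin phi r e A dA Hp (conj r0 (conj e0 re)) HA r ltac:(lra))) in H0.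
      assert (0 < sin r) by (apply sin_pos_h; lra). assert (0 < sin y) by (apply sin_pos_h; lra).
      replace (sin r / sin r) with 1 in H0 by (field; lra).
      assert (1 <= A y / sin y) by lra.
      replace (A y) with (A y / sin y * sin y) by (field; lra). nra.
  - assert (H := HW y ltac:(split; lra)). unfold W in H. lra.
Qed.

Lemma A_mid phi r e A dA : phiok phi -> parok r e -> is_A phi r e A dA ->
  forall y, r <= y < PI / 2 -> 0 < A y /\ 0 < dA y.
Proof.
  intros Hp Hpar HA y Hy. pose proof Hpar as [r0 [e0 re]].
  assert (Hs := sturm phi r e A dA Hp Hpar HA).
  assert (Hpos : forall z, r <= z <= y -> 0 < A z).
  { apply cont_ind. lra. intros; apply (A_cont _ _ _ _ _ _ HA).
    rewrite (proj1 (A_sin phi r e A dA Hp Hpar HA r ltac:(lra))). apply sin_pos_h; lra.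
    intros z Hz Hb. destruct (Hs z ltac:(lra) Hb). assert (0 < sin z) by (apply sin_pos_h; lra). lra. }
  destruct (Hs y Hy) as [H1 H2]. intros; apply Hpos; lra.
  assert (0 < sin y) by (apply sin_pos_h; lra). assert (0 < cos y) by (apply cos_pos_h; lra).
  split. lra. nra.
Qed.

Lemma A_hyp phi r e A dA : phiok phi -> parok r e -> is_A phi r e A dA ->
  forall x, r + e <= x -> 0 < A x /\ 0 < dA x.
Proof.
  intros Hp Hpar HA x Hx. pose proof Hpar as [r0 [e0 re]]. pose proof HA as [A0 [dA0 [DA [CdA DdA]]]].
  set (x0 := r + e).
  destruct (A_mid phi r e A dA Hp Hpar HA x0 ltac:(unfold x0; lra)) as [a0 b0].
  assert (Dd : forall t, x0 < t -> derivable_pt_lim dA t (A t)).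
  { intros t Ht. eapply deq. apply DdA. right. unfold x0 in Ht; lra.
    rewrite (K_right phi r e t Hp e0); unfold x0 in Ht; lra. }
  set (u := fun z => (A z + dA z) * exp (- (1) * (z - x0))).
  set (w := fun z => (dA z - A z) * exp (- (-1) * (z - x0))).
  assert (Cu : forall t, continuity_pt u t).
  { intro t. unfold u. pose proof (A_cont _ _ _ _ _ t HA). pose proof (CdA t).
    apply cmul. apply cadd; auto. apply (dcont _ _ _ (dexp_lin 1 x0 t)). }
  assert (Cw : forall t, continuity_pt w t).
  { intro t. unfold w. pose proof (A_cont _ _ _ _ _ t HA). pose proof (CdA t).
    apply cmul. apply csub; auto. apply (dcont _ _ _ (dexp_lin (-1) x0 t)). }
  assert (Du : forall t, x0 < t -> derivable_pt_lim u t 0).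
  { intros t Ht. unfold u. pose proof (DA t). pose proof (Dd t Ht). pose proof (dexp_lin 1 x0 t).
    dsolve. ring. }
  assert (Dw : forall t, x0 < t -> derivable_pt_lim w t 0).
  { intros t Ht. unfold w. pose proof (DA t). pose proof (Dd t Ht). pose proof (dexp_lin (-1) x0 t).
    dsolve. ring. }
  assert (Eu : u x - u x0 = 0).
  { assert (0 * (x - x0) <= u x - u x0). apply (lower_fin nil u (fun _ => 0)); auto.
    intros t Ht _. split; [apply Du; lra|cbv beta; lra].
    assert (u x - u x0 <= 0 * (x - x0)). apply (upper_fin nil u (fun _ => 0)); auto.
    intros t Ht _. split; [apply Du; lra|cbv beta; lra]. lra. }
  assert (Ew : w x - w x0 = 0).
  { assert (0 * (x - x0) <= w x - w x0). apply (lower_fin nil w (fun _ => 0)); auto.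
    intros t Ht _. split; [apply Dw; lra|cbv beta; lra].
    assert (w x - w x0 <= 0 * (x - x0)). apply (upper_fin nil w (fun _ => 0)); auto.
    intros t Ht _. split; [apply Dw; lra|cbv beta; lra]. lra. }
  unfold u, w in Eu, Ew. replace (x0 - x0) with 0 in Eu, Ew by ring.
  rewrite Rmult_0_r, exp_0 in Eu, Ew.
  set (P := exp (- (-1) * (x - x0))) in *. set (Q := exp (- (1) * (x - x0))) in *.
  assert (PQ : P * Q = 1). { unfold P, Q. rewrite <- exp_plus. replace (- (-1) * (x - x0) + - (1) * (x - x0)) with 0 by ring. apply exp_0. }
  assert (P1 : 1 <= P). { unfold P. rewrite <- exp_0. apply exp_le_mono. unfold x0 in *; lra. }
  assert (Q0 : 0 < Q) by apply exp_pos.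
  assert (S1 : A x + dA x = (A x0 + dA x0) * P).
  { replace (A x + dA x) with ((A x + dA x) * Q * P) by (rewrite Rmult_assoc, (Rmult_comm Q), PQ; ring).
    assert (E1 : (A x + dA x) * Q = A x0 + dA x0) by lra. rewrite E1. ring. }
  assert (S2 : dA x - A x = (dA x0 - A x0) * Q).
  { replace (dA x - A x) with ((dA x - A x) * P * Q) by (rewrite Rmult_assoc, PQ; ring).
    assert (E1 : (dA x - A x) * P = dA x0 - A x0) by lra. rewrite E1. ring. }
  assert (Q1 : Q <= 1) by nra.
  split.
  - destruct (Rle_dec (A x0) (dA x0)); nra.
  - destruct (Rle_dec (A x0) (dA x0)); nra.
Qed.

Lemma A_pos phi r e A dA : phiok phi -> parok r e -> is_A phi r e A dA ->
  forall x, 0 < x -> 0 < A x.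
Proof.
  intros Hp Hpar HA x Hx. pose proof Hpar as [r0 [e0 re]].
  destruct (Rle_dec x r).
  - rewrite (proj1 (A_sin phi r e A dA Hp Hpar HA x ltac:(lra))). apply sin_pos_h; lra.
  - destruct (Rlt_dec x (PI/2)).
    + apply (A_mid phi r e A dA Hp Hpar HA); lra.
    + apply (A_hyp phi r e A dA Hp Hpar HA); lra.
Qed.

Lemma dA_pos phi r e A dA : phiok phi -> parok r e -> is_A phi r e A dA ->
  forall x, 0 <= x -> 0 < dA x.
Proof.
  intros Hp Hpar HA x Hx. pose proof Hpar as [r0 [e0 re]].
  destruct (Rle_dec x r).
  - rewrite (proj2 (A_sin phi r e A dA Hp Hpar HA x ltac:(lra))). apply cos_pos_h; lra.
  - destruct (Rlt_dec x (PI/2)).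
    + apply (A_mid phi r e A dA Hp Hpar HA); lra.
    + apply (A_hyp phi r e A dA Hp Hpar HA); lra.
Qed.

Lemma A_nonneg phi r e A dA : phiok phi -> parok r e -> is_A phi r e A dA ->
  forall x, 0 <= x -> 0 <= A x.
Proof.
  intros Hp Hpar HA x Hx. destruct Hx as [Hx|Hx]. left; apply (A_pos phi r e A dA); auto.
  subst. destruct HA as [A0 _]. lra.
Qed.

Lemma A_mono phi r e A dA : phiok phi -> parok r e -> is_A phi r e A dA ->
  forall x y, 0 <= x <= y -> A x <= A y.
Proof.
  intros Hp Hpar HA x y Hxy. pose proof HA as [_ [_ [DA _]]].
  assert (0 * (y - x) <= A y - A x).
  { apply (lower_fin nil A dA); try lra. intros; apply (A_cont _ _ _ _ _ _ HA).
    intros t Ht _. split; auto. left; apply (dA_pos phi r e A dA); auto; lra. }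
  lra.
Qed.

Lemma A_bound phi r e A dA : phiok phi -> parok r e -> is_A phi r e A dA ->
  forall x, 0 <= x -> A x <= exp x /\ dA x <= exp x.
Proof.
  intros Hp Hpar HA x Hx. pose proof HA as [A0 [dA0 [DA [CdA DdA]]]].
  set (E := fun z => A z * A z + dA z * dA z).
  assert (H : E x <= (E 0 + 0 * (x - 0)) * exp (2 * (x - 0))).
  { apply (gron (r :: nil) E (fun z => dA z * A z + A z * dA z + (- (Kpar phi r e z * A z) * dA z + dA z * - (Kpar phi r e z * A z)))); try lra.
    - intros t Ht. unfold E. pose proof (A_cont _ _ _ _ _ t HA). pose proof (CdA t). repeat ctac.
    - intros t Ht Hn. assert (tr : t <> r) by (intro; apply Hn; simpl; auto).
      pose proof (DA t) as D1. assert (D2 := DdA t (or_intror tr)). split.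
      + unfold E. dsolve. ring.
      + pose proof (K_bound phi r e t Hp).
        assert (0 <= A t) by (apply (A_nonneg phi r e A dA); auto; lra).
        assert (0 <= dA t) by (left; apply (dA_pos phi r e A dA); auto; lra).
        set (k := Kpar phi r e t) in *. unfold E.
        assert (0 <= A t * dA t) by (apply Rmult_le_pos; auto).
        assert (A t * dA t * (1 - k) <= 2 * (A t * dA t)) by nra.
        pose proof (Rle_0_sqr (A t - dA t)). unfold Rsqr in *. nra. }
  unfold E in H. rewrite A0, dA0 in H. replace (2 * (x - 0)) with (x + x) in H by ring.
  rewrite exp_plus in H. 
  assert (0 <= A x) by (apply (A_nonneg phi r e A dA); auto).
  assert (0 <= dA x) by (left; apply (dA_pos phi r e A dA); auto).
  assert (0 < exp x) by apply exp_pos.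
  split; nra.
Qed.

Lemma sq_nonneg a : 0 <= a * a.
Proof. pose proof (Rle_0_sqr a). unfold Rsqr in H. auto. Qed.

Lemma arith3 Ex P Q u : 1 <= u -> 0 <= P -> 0 <= Q ->
  (Ex <= P * u \/ Ex <= (P * u + Q) * u \/ Ex <= ((P * u + Q) * u + P) * u) ->
  Ex <= (2 * P + Q) * (u * u * u).
Proof.
  intros e3ge P0 Q0 HH.
  assert (u1 : u <= u * u) by nra. assert (u2 : u * u <= u * u * u) by nra.
  assert (P * u <= P * (u * u)) by (apply Rmult_le_compat_l; lra).
  assert (P * (u * u) <= P * (u * u * u)) by (apply Rmult_le_compat_l; lra).
  assert (Q * u <= Q * (u * u)) by (apply Rmult_le_compat_l; lra).
  assert (Q * (u * u) <= Q * (u * u * u)) by (apply Rmult_le_compat_l; lra).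
  destruct HH as [Hx|[Hx|Hx]]; nra.
Qed.

Lemma lin_gron phi r e r0 e0 A dA A0 dA0 X m M gam :
  phiok phi -> parok r e -> parok r0 e0 -> is_A phi r e A dA -> is_A phi r0 e0 A0 dA0 ->
  0 <= X -> 0 <= m <= M -> 0 <= gam ->
  (forall x, 0 <= x <= X -> (x < m \/ M < x) -> Rabs (Kpar phi r e x - Kpar phi r0 e0 x) <= gam) ->
  forall x, 0 <= x <= X ->
  (A x - A0 x) * (A x - A0 x) + (dA x - dA0 x) * (dA x - dA0 x) <=
    (2 * (exp X * exp X * (gam * gam)) * X + 4 * (exp X * exp X) * (M - m)) * exp (9 * X).
Proof.
  intros Hp Hpar Hpar0 HA HA0 HX Hm Hg Hgood x Hx.
  pose proof HA as [A1 [dA1 [DA [CdA DdA]]]]. pose proof HA0 as [A01 [dA01 [DA0 [CdA0 DdA0]]]].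
  set (B := exp X). assert (B0 : 0 < B) by apply exp_pos.
  set (E := fun z => (A z - A0 z) * (A z - A0 z) + (dA z - dA0 z) * (dA z - dA0 z)).
  set (dE := fun z => (dA z - dA0 z) * (A z - A0 z) + (A z - A0 z) * (dA z - dA0 z) +
     ((- (Kpar phi r e z * A z) - - (Kpar phi r0 e0 z * A0 z)) * (dA z - dA0 z) +
      (dA z - dA0 z) * (- (Kpar phi r e z * A z) - - (Kpar phi r0 e0 z * A0 z)))).
  assert (CE : forall z, continuity_pt E z).
  { intro z. unfold E. pose proof (A_cont _ _ _ _ _ z HA). pose proof (A_cont _ _ _ _ _ z HA0).
    pose proof (CdA z). pose proof (CdA0 z). repeat ctac. }
  assert (DE : forall z, z <> r -> z <> r0 -> derivable_pt_lim E z (dE z)).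
  { intros z n1 n2. pose proof (DA z). pose proof (DA0 z). pose proof (DdA z (or_intror n1)).
    pose proof (DdA0 z (or_intror n2)). unfold E, dE. dsolve. ring. }
  assert (Hbd : forall z, 0 <= z <= X -> forall g, Rabs (Kpar phi r e z - Kpar phi r0 e0 z) <= g ->
     dE z <= 3 * E z + B * B * (g * g)).
  { intros z Hz g Hgz. unfold dE, E.
    set (k1 := Kpar phi r e z) in *. set (k0 := Kpar phi r0 e0 z) in *.
    assert (Kb := K_bound phi r e z Hp). fold k1 in Kb.
    assert (a0p : 0 <= A0 z) by (apply (A_nonneg phi r0 e0 A0 dA0); auto; lra).
    assert (a0b : A0 z <= B) by (destruct (A_bound phi r0 e0 A0 dA0 Hp Hpar0 HA0 z ltac:(lra)) as [Q _];
       unfold B; eapply Rle_trans; [apply Q| apply exp_le_mono; lra]).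
    set (zA := A z - A0 z). set (zD := dA z - dA0 z).
    replace (- (k1 * A z) - - (k0 * A0 z)) with (- k1 * zA - (k1 - k0) * A0 z) by (unfold zA; ring).
    assert (g1 : (k1 - k0) * (k1 - k0) <= g * g).
    { apply Rabs_le_between in Hgz. assert (0 <= g) by lra. nra. }
    assert (h1 : (k1 - k0) * A0 z * ((k1 - k0) * A0 z) <= B * B * (g * g)).
    { assert (A0 z * A0 z <= B * B) by nra. pose proof (sq_nonneg (k1 - k0)). pose proof (sq_nonneg (A0 z)). nra. }
    assert (h2 : k1 * zA * (k1 * zA) <= zA * zA).
    { assert (k1 * k1 <= 1) by nra. pose proof (sq_nonneg zA). nra. }
    pose proof (sq_nonneg (zD - zA)). pose proof (sq_nonneg (zD + k1 * zA)).
    pose proof (sq_nonneg (zD + (k1 - k0) * A0 z)). nra. }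
  assert (E0 : E 0 = 0). { unfold E. rewrite A1, A01, dA1, dA01. ring. }
  set (kg := B * B * (gam * gam)). set (kb := 4 * (B * B)).
  assert (kg0 : 0 <= kg) by (unfold kg; pose proof (sq_nonneg gam); nra).
  assert (kb0 : 0 <= kb) by (unfold kb; nra).
  assert (E0p : forall z, 0 <= E z) by (intro z; unfold E; pose proof (sq_nonneg (A z - A0 z)); pose proof (sq_nonneg (dA z - dA0 z)); lra).
  assert (Gr : forall a b k, 0 <= a <= b -> b <= X -> 0 <= k ->
     (forall z, a < z < b -> dE z <= 3 * E z + k) -> E b <= (E a + k * (b - a)) * exp (3 * X)).
  { intros a b k Hab HbX Hk Hd.
    assert (H := gron (r :: r0 :: nil) E dE a b 3 k ltac:(lra) ltac:(lra) Hk (fun z _ => CE z)).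
    assert (E b <= (E a + k * (b - a)) * exp (3 * (b - a))).
    { apply H. intros z Hz Hn. split. apply DE; intro; apply Hn; simpl; auto. apply Hd; auto. }
    assert (exp (3 * (b - a)) <= exp (3 * X)) by (apply exp_le_mono; lra).
    assert (0 <= E a + k * (b - a)) by (pose proof (E0p a); nra).
    eapply Rle_trans. apply H0. apply Rmult_le_compat_l; auto. }
  assert (Kb2 : forall z, Rabs (Kpar phi r e z - Kpar phi r0 e0 z) <= 2).
  { intro z. pose proof (K_bound phi r e z Hp). pose proof (K_bound phi r0 e0 z Hp). apply Rabs_le; lra. }
  assert (e3ge : 1 <= exp (3 * X)) by (rewrite <- exp_0; apply exp_le_mono; lra).
  assert (e9 : exp (3 * X) * exp (3 * X) * exp (3 * X) = exp (9 * X)).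
  { rewrite <- !exp_plus. f_equal. ring. }
  set (mm := Rmin X m). set (MM := Rmin X M). set (e3 := exp (3 * X)) in *.
  assert (Fm : 0 <= mm <= MM /\ MM <= X /\ MM - mm <= M - m /\ mm <= m /\ (MM = M \/ MM = X)).
  { unfold mm, MM, Rmin. destruct (Rle_dec X m); destruct (Rle_dec X M); lra. }
  destruct Fm as [F1 [F2 [F3 [F4 F5]]]].
  assert (Hm1 : forall z, 0 <= z <= mm -> E z <= kg * X * e3).
  { intros z Hz. assert (H := Gr 0 z kg ltac:(lra) ltac:(lra) kg0).
    rewrite E0, Rplus_0_l in H. eapply Rle_trans. apply H.
    intros t Ht. unfold kg. apply Hbd. lra. apply Hgood. lra. left. lra.
    apply Rmult_le_compat_r. unfold e3; left; apply exp_pos. apply Rmult_le_compat_l; lra. }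
  assert (Hm2 : forall z, mm <= z <= MM -> E z <= (kg * X * e3 + kb * (M - m)) * e3).
  { intros z Hz. assert (H := Gr mm z kb ltac:(lra) ltac:(lra) kb0).
    eapply Rle_trans. apply H.
    intros t Ht. unfold kb. replace (4 * (B * B)) with (B * B * (2 * 2)) by ring.
    apply Hbd. lra. apply Kb2.
    apply Rmult_le_compat_r. unfold e3; left; apply exp_pos. assert (E mm <= kg * X * e3) by (apply Hm1; lra).
    assert (kb * (z - mm) <= kb * (M - m)) by (apply Rmult_le_compat_l; lra). lra. }
  assert (Hm3 : forall z, MM <= z <= X -> E z <= ((kg * X * e3 + kb * (M - m)) * e3 + kg * X) * e3).
  { intros z Hz. assert (H := Gr MM z kg ltac:(lra) ltac:(lra) kg0).
    eapply Rle_trans. apply H.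
    intros t Ht. unfold kg. apply Hbd. lra. apply Hgood. lra. right. destruct F5; lra.
    apply Rmult_le_compat_r. unfold e3; left; apply exp_pos. assert (E MM <= (kg * X * e3 + kb * (M - m)) * e3) by (apply Hm2; lra).
    assert (kg * (z - MM) <= kg * X) by (apply Rmult_le_compat_l; lra). lra. }
  rewrite <- e9. change (E x <= (2 * kg * X + kb * (M - m)) * (e3 * e3 * e3)).
  assert (P0 : 0 <= kg * X) by (apply Rmult_le_pos; lra).
  assert (Q0 : 0 <= kb * (M - m)) by (apply Rmult_le_pos; lra).
  assert (HH : E x <= kg * X * e3 \/ E x <= (kg * X * e3 + kb * (M - m)) * e3 \/
     E x <= ((kg * X * e3 + kb * (M - m)) * e3 + kg * X) * e3).
  { assert (x <= mm \/ mm <= x <= MM \/ MM <= x) as [C|[C|C]] by lra.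
    left; apply Hm1; lra. right; left; apply Hm2; lra. right; right; apply Hm3; lra. }
  replace (2 * kg * X) with (2 * (kg * X)) by ring.
  apply arith3; auto.
Qed.

Definition clamp u := Rmax 0 (Rmin 1 u).

Lemma clamp_in u : 0 <= clamp u <= 1.
Proof. unfold clamp, Rmax, Rmin. destruct (Rle_dec 1 u); destruct (Rle_dec 0 _); lra. Qed.
Lemma clamp_lip u v : Rabs (clamp u - clamp v) <= Rabs (u - v).
Proof.
  unfold clamp, Rmax, Rmin. apply Rabs_le. pose proof (Rabs_le_between (u - v) (Rabs (u - v))) as [H _].
  specialize (H (Rle_refl _)).
  destruct (Rle_dec 1 u); destruct (Rle_dec 1 v); repeat destruct (Rle_dec 0 _); lra.
Qed.
Lemma phi_clamp phi u : phiok phi -> phi u = phi (clamp u).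
Proof.
  intros [_ [H0 H1]]. unfold clamp, Rmax, Rmin. destruct (Rle_dec 1 u).
  - destruct (Rle_dec 0 1); [|lra]. rewrite !H1; lra.
  - destruct (Rle_dec 0 u). reflexivity. rewrite !H0; lra.
Qed.

Lemma smooth_cont phi : smooth phi -> forall x, continuity_pt phi x.
Proof. intros [D [D0 HD]] x. rewrite <- D0. apply (dcont _ _ _ (HD O x)). Qed.

Lemma phi_uc phi : phiok phi -> smooth phi -> forall g, 0 < g ->
  exists h, 0 < h /\ forall u v, Rabs (u - v) < h -> Rabs (phi u - phi v) < g.
Proof.
  intros Hp Hs g Hg.
  destruct (Heine_cor2 (f := phi) (a := 0) (b := 1) (fun x _ => smooth_cont phi Hs x) (mkposreal g Hg)) as [d Hd].
  exists d. split. apply cond_pos. intros u v Huv.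
  rewrite (phi_clamp phi u Hp), (phi_clamp phi v Hp). apply Hd. apply clamp_in. apply clamp_in.
  eapply Rle_lt_trans. apply clamp_lip. auto.
Qed.

Lemma abs_of_sq a b : 0 <= b -> a * a <= b * b -> Rabs a <= b.
Proof. intros. apply Rabs_le. split; nra. Qed.

Lemma A_parcont phi r0 e0 X : phiok phi -> smooth phi -> parok r0 e0 -> 0 <= X ->
  forall eps, 0 < eps -> exists del, 0 < del /\
  forall r e A dA A0 dA0, parok r e -> Rabs (r - r0) < del -> Rabs (e - e0) < del ->
    is_A phi r e A dA -> is_A phi r0 e0 A0 dA0 ->
    forall x, 0 <= x <= X -> Rabs (A x - A0 x) <= eps /\ Rabs (dA x - dA0 x) <= eps.
Proof.
  intros Hp Hs Hpar0 HX eps Heps. pose proof Hpar0 as [r00 [e00 re0]].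
  set (B := exp X). set (e9 := exp (9 * X)).
  assert (B0 : 0 < B) by apply exp_pos. assert (e90 : 0 < e9) by apply exp_pos.
  set (target := eps * eps).
  assert (t0 : 0 < target) by (unfold target; nra).
  assert (Hfin : forall r e A dA A0 dA0 m M gam, parok r e -> is_A phi r e A dA -> is_A phi r0 e0 A0 dA0 ->
     0 <= m <= M -> 0 <= gam ->
     (forall x, 0 <= x <= X -> (x < m \/ M < x) -> Rabs (Kpar phi r e x - Kpar phi r0 e0 x) <= gam) ->
     (2 * (B * B * (gam * gam)) * X + 4 * (B * B) * (M - m)) * e9 <= target ->
     forall x, 0 <= x <= X -> Rabs (A x - A0 x) <= eps /\ Rabs (dA x - dA0 x) <= eps).
  { intros r e A dA A0 dA0 m M gam Hpar HA HA0 Hm Hg Hgood Hb x Hx.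
    assert (H := lin_gron phi r e r0 e0 A dA A0 dA0 X m M gam Hp Hpar Hpar0 HA HA0 HX Hm Hg Hgood x Hx).
    fold B e9 in H. pose proof (sq_nonneg (A x - A0 x)). pose proof (sq_nonneg (dA x - dA0 x)).
    split; apply abs_of_sq; unfold target in Hb; lra. }
  destruct (Req_dec e0 0) as [E0|E0].
  -
    set (del := Rmin 1 (target / (8 * (B * B) * e9 + 1))).
    assert (d0 : 0 < del).
    { unfold del. apply Rmin_glb_lt. lra. apply Rdiv_lt_0_compat. auto. pose proof (Rmult_lt_0_compat _ _ B0 B0). nra. }
    exists del. split; auto. intros r e A dA A0 dA0 Hpar Hr He HA HA0.
    pose proof Hpar as [r1 [e1 re1]].
    apply (Hfin r e A dA A0 dA0 (Rmin r r0) (Rmax r r0 + e) 0); auto.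
    + split. apply Rmin_glb; lra. unfold Rmin, Rmax; destruct (Rle_dec r r0); lra.
    + lra.
    + intros x Hx [C|C].
      * rewrite (K_left phi r e x Hp), (K_left phi r0 e0 x Hp); try lra.
        rewrite Rminus_diag, Rabs_R0; lra. pose proof (Rmin_r r r0); lra. pose proof (Rmin_l r r0); lra.
      * rewrite (K_right phi r e x Hp), (K_right phi r0 e0 x Hp); try lra.
        rewrite Rminus_diag, Rabs_R0; lra. pose proof (Rmax_r r r0); lra. pose proof (Rmax_r r r0); lra.
        pose proof (Rmax_l r r0); lra. pose proof (Rmax_l r r0); lra.
    + assert (Mm : Rmax r r0 + e - Rmin r r0 <= 2 * del).
      { rewrite E0 in He. apply Rabs_lt_between in Hr. apply Rabs_lt_between in He.
        unfold Rmin, Rmax; destruct (Rle_dec r r0); lra. }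
      assert (dl : del <= target / (8 * (B * B) * e9 + 1)) by apply Rmin_r.
      assert (0 < 8 * (B * B) * e9 + 1) by (pose proof (Rmult_lt_0_compat _ _ B0 B0); nra).
      assert (del * (8 * (B * B) * e9 + 1) <= target).
      { apply (Rmult_le_compat_r (8 * (B * B) * e9 + 1)) in dl; [|lra].
        replace (target / (8 * (B * B) * e9 + 1) * (8 * (B * B) * e9 + 1)) with target in dl by (field; lra). lra. }
      assert (0 <= B * B) by nra.
      assert (0 <= Rmax r r0 + e - Rmin r r0) by (unfold Rmin, Rmax; destruct (Rle_dec r r0); lra).
      assert (4 * (B * B) * (Rmax r r0 + e - Rmin r r0) * e9 <= 4 * (B * B) * (2 * del) * e9).
      { apply Rmult_le_compat_r; [lra|]. apply Rmult_le_compat_l; lra. }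
      assert (0 <= del * (B * B) * e9) by (apply Rmult_le_pos; [apply Rmult_le_pos|]; lra).
      nra.
  - assert (e0p : 0 < e0) by lra.
    set (gam := Rmin 1 (target / (2 * (B * B) * X * e9 + 1))).
    assert (g0 : 0 < gam).
    { unfold gam. apply Rmin_glb_lt. lra. apply Rdiv_lt_0_compat. auto.
      assert (0 <= 2 * (B * B) * X * e9) by (repeat apply Rmult_le_pos; nra). lra. }
    destruct (phi_uc phi Hp Hs (gam / 2) ltac:(lra)) as [h [h0 Hh]].
    set (C0 := 2 * (X + r0 + e0) + 1).
    assert (C00 : 0 < C0) by (unfold C0; lra).
    set (del := Rmin (e0 / 2) (h * (e0 * e0) / C0)).
    assert (d0 : 0 < del).
    { unfold del. apply Rmin_glb_lt. lra. apply Rdiv_lt_0_compat; auto. apply Rmult_lt_0_compat; [lra|apply Rmult_lt_0_compat; lra]. }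
    exists del. split; auto. intros r e A dA A0 dA0 Hpar Hr He HA HA0.
    pose proof Hpar as [r1 [e1 re1]].
    assert (dl1 : del <= e0 / 2) by apply Rmin_l.
    assert (dl2 : del <= h * (e0 * e0) / C0) by apply Rmin_r.
    assert (ep : e0 / 2 < e) by (apply Rabs_lt_between in He; lra).
    apply (Hfin r e A dA A0 dA0 0 0 gam); auto; try lra.
    + intros x Hx [C|C]; [lra|].
      unfold Kpar. destruct (Req_EM_T e 0) as [Q|_]; [lra|]. destruct (Req_EM_T e0 0) as [Q|_]; [lra|].
      replace (1 - 2 * phi ((x - r) / e) - (1 - 2 * phi ((x - r0) / e0))) with
        (- 2 * (phi ((x - r) / e) - phi ((x - r0) / e0))) by ring.
      rewrite Rabs_mult. replace (Rabs (-2)) with 2 by (rewrite Rabs_left; lra).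
      enough (Rabs (phi ((x - r) / e) - phi ((x - r0) / e0)) < gam / 2) by lra.
      apply Hh.
      replace ((x - r) / e - (x - r0) / e0) with ((x * (e0 - e) + r0 * (e - e0) + e0 * (r0 - r)) / (e * e0))
        by (field; lra).
      unfold Rdiv. rewrite Rabs_mult. rewrite (Rabs_right (/ (e * e0))) by (left; apply Rinv_0_lt_compat; nra).
      assert (N : Rabs (x * (e0 - e) + r0 * (e - e0) + e0 * (r0 - r)) < (X + r0 + e0) * del).
      { eapply Rle_lt_trans. eapply Rle_trans. apply Rabs_triang. apply Rplus_le_compat_r. apply Rabs_triang.
        rewrite !Rabs_mult, (Rabs_right x), (Rabs_right r0), (Rabs_right e0) by lra.
        rewrite <- Rabs_Ropp in He. replace (- (e - e0)) with (e0 - e) in He by ring.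
        rewrite <- Rabs_Ropp in Hr. replace (- (r - r0)) with (r0 - r) in Hr by ring.
        rewrite <- Rabs_Ropp, Ropp_minus_distr in He.
        assert (x * Rabs (e0 - e) <= X * del).
        { rewrite Rabs_minus_sym. apply Rmult_le_compat; try lra. apply Rabs_pos. }
        assert (r0 * Rabs (e - e0) <= r0 * del) by (apply Rmult_le_compat_l; lra).
        assert (e0 * Rabs (r0 - r) < e0 * del) by (apply Rmult_lt_compat_l; lra). lra. }
      assert (I1 : / (e * e0) <= 2 / (e0 * e0)).
      { replace (2 / (e0 * e0)) with (/ (e0 * e0 / 2)) by (field; lra).
        apply Rinv_le_contravar. nra. nra. }
      assert (0 <= / (e * e0)) by (left; apply Rinv_0_lt_compat; nra).
      assert (Rabs (x * (e0 - e) + r0 * (e - e0) + e0 * (r0 - r)) * / (e * e0) <= (X + r0 + e0) * del * (2 / (e0 * e0))).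
      { apply Rmult_le_compat; try lra. apply Rabs_pos. }
      assert ((X + r0 + e0) * del * (2 / (e0 * e0)) < h).
      { apply (Rmult_le_compat_r C0) in dl2; [|lra].
        replace (h * (e0 * e0) / C0 * C0) with (h * (e0 * e0)) in dl2 by (field; lra).
        apply (Rmult_lt_reg_r (e0 * e0)). nra. unfold Rdiv. rewrite !Rmult_assoc.
        rewrite Rinv_l by nra. unfold C0 in dl2. nra. }
      lra.
    + pose proof (sq_nonneg gam).
      assert (gg : gam * gam <= gam) by (assert (gam <= 1) by apply Rmin_l; nra).
      assert (gt : gam <= target / (2 * (B * B) * X * e9 + 1)) by apply Rmin_r.
      set (Z := 2 * (B * B) * X * e9).
      assert (Z0 : 0 <= Z) by (unfold Z; repeat apply Rmult_le_pos; nra).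
      assert (gam * (Z + 1) <= target).
      { change (gam <= target / (Z + 1)) in gt. apply (Rmult_le_compat_r (Z + 1)) in gt; [|lra].
        replace (target / (Z + 1) * (Z + 1)) with target in gt by (field; lra). lra. }
      replace ((2 * (B * B * (gam * gam)) * X + 4 * (B * B) * (0 - 0)) * e9) with (Z * (gam * gam)) by (unfold Z; ring).
      assert (Z * (gam * gam) <= Z * gam) by (apply Rmult_le_compat_l; lra). nra.
Qed.

Lemma rho_inner phi r e A dA s rho drho ddrho :
  phiok phi -> parok r e -> is_A phi r e A dA -> 0 < s ->
  is_rho A dA s rho drho ddrho ->
  forall y, 0 <= y -> (forall x, 0 <= x < y -> s / 2 < rho x) ->
  (forall x, 0 <= x <= y -> (1 - drho x * drho x) * (A (rho x) * A (rho x)) = A s * A s) /\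
  (forall x, 0 <= x <= y -> 0 <= drho x) /\
  (forall x, 0 <= x <= y -> s <= rho x).
Proof.
  intros Hp Hpar HA Hs Hrho y Hy Hb.
  destruct Hrho as [Dr [Dv [Hode _]]]. destruct (Hode Hs) as [r0 [v0 ode]].
  pose proof HA as [A0 [dA0 [DA [CdA DdA]]]].
  set (Q := fun x => (1 - drho x * drho x) * (A (rho x) * A (rho x))).
  assert (DAr : forall x, 0 <= x -> derivable_pt_lim (fun t => A (rho t)) x (dA (rho x) * drho x)).
  { intros x Hx. apply dcomp; auto. }
  assert (CQ : forall x, 0 <= x -> continuity_pt Q x).
  { intros x Hx. unfold Q. pose proof (dcont _ _ _ (Dv x Hx)). pose proof (dcont _ _ _ (DAr x Hx)). repeat ctac. }
  assert (HQ : forall x, 0 <= x <= y -> Q x = A s * A s).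
  { intros x Hx.
    assert (Hd : forall z, 0 < z < x -> derivable_pt_lim Q z 0).
    { intros z Hz. assert (Ap : 0 < A (rho z)) by (apply (A_pos phi r e A dA); auto; specialize (Hb z ltac:(lra)); lra).
      pose proof (DAr z ltac:(lra)). pose proof (Dv z ltac:(lra)). unfold Q. dsolve.
      rewrite ode by lra. field. lra. }
    assert (0 * (x - 0) <= Q x - Q 0). apply (lower_fin nil Q (fun _ => 0)). lra.
    intros; apply CQ; lra. intros z Hz _. split. apply Hd; auto. cbv beta; lra.
    assert (Q x - Q 0 <= 0 * (x - 0)). apply (upper_fin nil Q (fun _ => 0)). lra.
    intros; apply CQ; lra. intros z Hz _. split. apply Hd; auto. cbv beta; lra.
    unfold Q in *. rewrite r0, v0 in *. lra. }
  assert (Hdd : forall z, 0 < z < y -> 0 <= ddrho z).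
  { intros z Hz. assert (Ap : 0 < A (rho z)) by (apply (A_pos phi r e A dA); auto; specialize (Hb z ltac:(lra)); lra).
    assert (dAp : 0 < dA (rho z)) by (apply (dA_pos phi r e A dA); auto; specialize (Hb z ltac:(lra)); lra).
    rewrite ode by lra. assert (HQz := HQ z ltac:(lra)). unfold Q in HQz.
    assert (As : 0 < A s) by (apply (A_pos phi r e A dA); auto).
    assert (0 < 1 - drho z * drho z).
    { destruct (Rle_dec (1 - drho z * drho z) 0); [|lra].
      assert ((1 - drho z * drho z) * (A (rho z) * A (rho z)) <= 0). apply Rmult_le_0_r; auto. nra. nra. }
    apply Rmult_le_pos. left; apply Rdiv_lt_0_compat; auto. simpl. lra. }
  assert (Hv : forall x, 0 <= x <= y -> 0 <= drho x).
  { intros x Hx. assert (0 * (x - 0) <= drho x - drho 0).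
    apply (lower_fin nil drho ddrho). lra. intros z Hz; apply (dcont _ _ _ (Dv z ltac:(lra))).
    intros z Hz _. split. apply Dv; lra. apply Hdd; lra. lra. }
  split; [|split]; auto.
  intros x Hx. assert (0 * (x - 0) <= rho x - rho 0).
  apply (lower_fin nil rho drho). lra. intros z Hz; apply (dcont _ _ _ (Dr z ltac:(lra))).
  intros z Hz _. split. apply Dr; lra. apply Hv; lra. lra.
Qed.

Lemma rho_basic phi r e A dA s rho drho ddrho :
  phiok phi -> parok r e -> is_A phi r e A dA -> 0 < s ->
  is_rho A dA s rho drho ddrho ->
  forall t, 0 <= t ->
  s <= rho t /\ 0 <= drho t <= 1 /\
  (1 - drho t * drho t) * (A (rho t) * A (rho t)) = A s * A s /\
  ddrho t = dA (rho t) / A (rho t) * (1 - drho t * drho t).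
Proof.
  intros Hp Hpar HA Hs Hrho t Ht.
  pose proof Hrho as [Dr [Dv [Hode _]]]. destruct (Hode Hs) as [r0 [v0 ode]].
  assert (Hpos : forall x, 0 <= x <= t + 1 -> 0 < rho x - s / 2).
  { apply cont_ind. lra. intros x Hx. apply csub. apply (dcont _ _ _ (Dr x ltac:(lra))). apply ccst.
    rewrite r0; lra. intros y Hy Hb.
    destruct (rho_inner phi r e A dA s rho drho ddrho Hp Hpar HA Hs Hrho y ltac:(lra)) as [_ [_ H3]].
    intros x Hx. specialize (Hb x Hx). lra. specialize (H3 y ltac:(lra)). lra. }
  destruct (rho_inner phi r e A dA s rho drho ddrho Hp Hpar HA Hs Hrho (t + 1) ltac:(lra)) as [H1 [H2 H3]].
  intros x Hx. specialize (Hpos x ltac:(lra)). lra.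
  specialize (H1 t ltac:(lra)). specialize (H2 t ltac:(lra)). specialize (H3 t ltac:(lra)).
  assert (Ap : 0 < A (rho t)) by (apply (A_pos phi r e A dA); auto; lra).
  split; auto. split. split; auto.
  destruct (Rle_dec (drho t) 1) as [|n]; auto.
  assert ((1 - drho t * drho t) * (A (rho t) * A (rho t)) < 0).
  { apply Rmult_neg_pos. nra. nra. }
  pose proof (sq_nonneg (A s)). lra.
  split; auto. rewrite ode by auto. simpl. f_equal. ring.
Qed.

Lemma rho_mono phi r e A dA s rho drho ddrho :
  phiok phi -> parok r e -> is_A phi r e A dA -> 0 < s ->
  is_rho A dA s rho drho ddrho ->
  forall t1 t2, 0 <= t1 <= t2 -> rho t1 <= rho t2 /\ rho t2 - rho t1 <= t2 - t1.
Proof.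
  intros Hp Hpar HA Hs Hrho t1 t2 Ht.
  pose proof Hrho as [Dr _].
  split.
  - assert (0 * (t2 - t1) <= rho t2 - rho t1). apply (lower_fin nil rho drho). lra.
    intros z Hz; apply (dcont _ _ _ (Dr z ltac:(lra))).
    intros z Hz _. split. apply Dr; lra. apply (rho_basic phi r e A dA s rho drho ddrho); auto; lra. lra.
  - assert (rho t2 - rho t1 <= 1 * (t2 - t1)). apply (upper_fin nil rho drho). lra.
    intros z Hz; apply (dcont _ _ _ (Dr z ltac:(lra))).
    intros z Hz _. split. apply Dr; lra. apply (rho_basic phi r e A dA s rho drho ddrho); auto; lra. lra.
Qed.

Lemma sin_le_x x : 0 <= x -> sin x <= x.
Proof. intros [H|H]. left; apply sin_lt_x; auto. subst; rewrite sin_0; lra. Qed.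

Lemma cos_lb x : 0 <= x -> 1 - x * x / 2 <= cos x.
Proof.
  intros Hx. assert (0 * (x - 0) <= (cos x - 1 + x * x / 2) - (cos 0 - 1 + 0 * 0 / 2)).
  { apply (lower_fin nil (fun y => cos y - 1 + y * y / 2) (fun y => - sin y + y)). lra.
    intros z Hz. unfold Rdiv. repeat ctac.
    intros z Hz _. split. unfold Rdiv. dsolve. field. pose proof (sin_le_x z ltac:(lra)). lra. }
  rewrite cos_0 in H. lra.
Qed.

Lemma sin_lb2 x : 0 <= x <= 1 -> x / 2 <= sin x.
Proof.
  intros Hx. assert (0 * (x - 0) <= (sin x - x / 2) - (sin 0 - 0 / 2)).
  { apply (lower_fin nil (fun y => sin y - y / 2) (fun y => cos y - 1 / 2)). lra.
    intros z Hz. unfold Rdiv. repeat ctac.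
    intros z Hz _. split. unfold Rdiv. dsolve. field. pose proof (cos_lb z ltac:(lra)). nra. }
  rewrite sin_0 in H. lra.
Qed.

Lemma rho_small phi rm : phiok phi -> 0 < rm <= 1 -> forall T eps, 0 <= T -> 0 < eps ->
  exists del, 0 < del /\ forall r e A dA s rho drho ddrho, parok r e -> rm <= r ->
  is_A phi r e A dA -> 0 < s < del -> is_rho A dA s rho drho ddrho ->
  forall t, 0 <= t <= T -> Rabs (rho t - t) <= eps.
Proof.
  intros Hp Hrm T eps HT Heps.
  set (m := 1 + 8 * T / eps).
  assert (m1 : 1 <= m) by (unfold m; assert (0 <= 8 * T / eps) by (apply Rcomplements.Rdiv_le_0_compat; lra); lra).
  assert (Hm : 4 * T / (m * m) <= eps / 2).
  { assert (m * eps = eps + 8 * T) by (unfold m; field; lra).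
    apply (Rmult_le_reg_r (m * m)). nra. unfold Rdiv. rewrite Rmult_assoc, Rinv_l by nra. nra. }
  set (del := Rmin (rm / m) (eps / (32 * (m * m)))).
  assert (d0 : 0 < del).
  { unfold del. apply Rmin_glb_lt; apply Rdiv_lt_0_compat; nra. }
  exists del. split; auto.
  intros r e A dA s rho drho ddrho Hpar Hr HA Hs Hrho t Ht.
  pose proof Hpar as [r0 [e0 re]].
  assert (dl1 : del <= rm / m) by apply Rmin_l. assert (dl2 : del <= eps / (32 * (m * m))) by apply Rmin_r.
  set (a := s * m). set (tau := 16 * s * (m * m)).
  assert (ar : a <= rm). { unfold a. assert (s <= rm / m) by lra. apply (Rmult_le_compat_r m) in H; [|lra].
    replace (rm / m * m) with rm in H by (field; lra). lra. }
  assert (sa : s <= a) by (unfold a; nra).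
  assert (taue : tau < eps / 2).
  { unfold tau. assert (s < eps / (32 * (m * m))) by lra. apply (Rmult_lt_compat_r (32 * (m * m))) in H; [|nra].
    replace (eps / (32 * (m * m)) * (32 * (m * m))) with eps in H by (field; nra). lra. }
  assert (tau0 : 0 < tau) by (unfold tau; apply Rmult_lt_0_compat; [lra|apply Rmult_lt_0_compat; lra]).
  assert (Bas := rho_basic phi r e A dA s rho drho ddrho Hp Hpar HA ltac:(lra) Hrho).
  assert (Mon := rho_mono phi r e A dA s rho drho ddrho Hp Hpar HA ltac:(lra) Hrho).
  pose proof Hrho as [Dr [Dv [Hode _]]]. destruct (Hode ltac:(lra)) as [r00 [v00 ode]].
  assert (Asin : forall x, 0 <= x <= a -> A x = sin x /\ dA x = cos x).
  { intros x Hx. apply (A_sin phi r e A dA Hp Hpar HA). lra. }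
  assert (sins : s / 2 <= sin s <= s) by (split; [apply sin_lb2; lra|apply sin_le_x; lra]).
  assert (Ph1 : a <= rho tau).
  { destruct (Rle_dec a (rho tau)) as [|N]; auto. exfalso.
    set (kap := / (8 * s * (m * m * m))).
    assert (kp : 0 < kap) by (unfold kap; apply Rinv_0_lt_compat; repeat apply Rmult_lt_0_compat; lra).
    assert (Hdd : forall t, 0 <= t <= tau -> kap <= ddrho t).
    { intros z Hz. destruct (Bas z ltac:(lra)) as [B1 [B2 [B3 B4]]].
      destruct (Mon z tau ltac:(lra)) as [M1 _].
      assert (rz : s <= rho z < a) by lra.
      destruct (Asin (rho z) ltac:(lra)) as [E1 E2]. destruct (Asin s ltac:(lra)) as [E3 _].
      rewrite E1, E2 in B4. rewrite E1, E3 in B3.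
      assert (Sp : 0 < sin (rho z)) by (apply sin_pos_h; pose proof PI2_1; lra).
      assert (Sle : sin (rho z) <= a) by (pose proof (sin_le_x (rho z) ltac:(lra)); lra).
      assert (Cge : 1 / 2 <= cos (rho z)) by (pose proof (cos_lb (rho z) ltac:(lra)); nra).
      set (S := sin (rho z)) in *. set (c := cos (rho z)) in *.
      assert (K1 : ddrho z * (S * S * S) = c * (sin s * sin s)).
      { rewrite B4, <- B3. field. lra. }
      assert (K2 : kap * (S * S * S) <= kap * (a * a * a)).
      { apply Rmult_le_compat_l. lra. assert (S * S <= a * a) by nra. nra. }
      assert (K3 : kap * (a * a * a) = s * s / 8).
      { unfold kap, a. field. nra. }
      assert (K4 : s * s / 8 <= c * (sin s * sin s)).
      { assert (s * s / 4 <= sin s * sin s) by nra. nra. }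
      assert (S3 : 0 < S * S * S) by (repeat apply Rmult_lt_0_compat; lra).
      apply (Rmult_le_reg_r (S * S * S)); auto. lra. }
    assert (Hv : forall t, 0 <= t <= tau -> kap * t <= drho t).
    { intros z Hz. assert (kap * (z - 0) <= drho z - drho 0).
      apply (lower_fin nil drho ddrho). lra. intros y Hy; apply (dcont _ _ _ (Dv y ltac:(lra))).
      intros y Hy _. split. apply Dv; lra. apply Hdd; lra. lra. }
    assert (0 * (tau - 0) <= (rho tau - kap * tau * tau / 2) - (rho 0 - kap * 0 * 0 / 2)).
    { apply (lower_fin nil (fun y => rho y - kap * y * y / 2) (fun y => drho y - kap * y)). lra.
      intros y Hy. unfold Rdiv. pose proof (dcont _ _ _ (Dr y ltac:(lra))). repeat ctac.
      intros y Hy _. split. unfold Rdiv. pose proof (Dr y ltac:(lra)). dsolve. field.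
      specialize (Hv y ltac:(lra)). lra. }
    rewrite r00 in H.
    assert (kap * tau * tau / 2 = 16 * a) by (unfold kap, tau, a; field; nra).
    unfold a in *. nra. }
  destruct (Bas t ltac:(lra)) as [B1 [B2 [B3 B4]]].
  destruct (Mon 0 t ltac:(lra)) as [_ M2]. rewrite r00 in M2.
  assert (sle : s <= tau) by (unfold tau; assert (1 <= m * m) by nra; nra).
  apply Rabs_le. split; [|lra].
  destruct (Rle_dec t tau) as [C|C]; [lra|].
  assert (Hv2 : forall z, tau <= z -> 1 - 4 / (m * m) <= drho z).
  { intros z Hz. destruct (Bas z ltac:(lra)) as [C1 [C2 [C3 C4]]].
    destruct (Mon tau z ltac:(lra)) as [D1 _].
    assert (Aa : sin a <= A (rho z)).
    { destruct (Asin a ltac:(lra)) as [Q _]. rewrite <- Q. apply (A_mono phi r e A dA Hp Hpar HA). lra. }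
    assert (sa2 : a / 2 <= sin a) by (apply sin_lb2; lra).
    destruct (Asin s ltac:(lra)) as [E3 _]. rewrite E3 in C3.
    assert (Ap : 0 < A (rho z)) by lra.
    assert (1 - drho z * drho z <= 4 / (m * m)).
    { assert (a * a / 4 <= A (rho z) * A (rho z)) by nra.
      assert (sin s * sin s <= s * s) by nra.
      assert ((1 - drho z * drho z) * (a * a / 4) <= s * s).
      { destruct (Rle_dec 0 (1 - drho z * drho z)).
        assert ((1 - drho z * drho z) * (a * a / 4) <= (1 - drho z * drho z) * (A (rho z) * A (rho z))) by (apply Rmult_le_compat_l; lra). lra.
        assert (0 <= a * a / 4) by nra. nra. }
      unfold a in H1. replace (4 / (m * m)) with ((s * s) / (s * s * m * m / 4)) by (field; nra).
      apply Rcomplements.Rle_div_r. unfold Rdiv; repeat apply Rmult_lt_0_compat; lra.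
      replace ((1 - drho z * drho z) * (s * s * m * m / 4)) with ((1 - drho z * drho z) * (s * m * (s * m) / 4)) by (unfold Rdiv; ring); lra. }
    nra. }
  assert ((1 - 4 / (m * m)) * (t - tau) <= rho t - rho tau).
  { apply (lower_fin nil rho drho). lra. intros y Hy; apply (dcont _ _ _ (Dr y ltac:(lra))).
    intros y Hy _. split. apply Dr; lra. apply Hv2; lra. }
  assert (4 / (m * m) * (t - tau) <= 4 * T / (m * m)).
  { replace (4 * T / (m * m)) with (4 / (m * m) * T) by (unfold Rdiv; ring). apply Rmult_le_compat_l.
    assert (0 < / (m * m)) by (apply Rinv_0_lt_compat; nra). unfold Rdiv. lra. lra. }
  lra.
Qed.

Lemma rho_gron (G G0 rho v dd rho0 v0 dd0 : R -> R) x1 X T M L dG :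
  0 <= T -> 0 <= M -> 0 <= L -> 0 <= dG ->
  (forall x, x1 <= x <= X -> Rabs (G0 x) <= M) ->
  (forall x y, x1 <= x <= X -> x1 <= y <= X -> Rabs (G0 x - G0 y) <= L * Rabs (x - y)) ->
  (forall x, x1 <= x <= X -> Rabs (G x - G0 x) <= dG) ->
  (forall t, 0 <= t <= T -> x1 <= rho t <= X /\ x1 <= rho0 t <= X /\ 0 <= v t <= 1 /\ 0 <= v0 t <= 1 /\
     dd t = G (rho t) * (1 - v t * v t) /\ dd0 t = G0 (rho0 t) * (1 - v0 t * v0 t)) ->
  (forall t, 0 <= t -> derivable_pt_lim rho t (v t) /\ derivable_pt_lim v t (dd t) /\
     derivable_pt_lim rho0 t (v0 t) /\ derivable_pt_lim v0 t (dd0 t)) ->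
  forall t, 0 <= t <= T ->
  (rho t - rho0 t) * (rho t - rho0 t) + (v t - v0 t) * (v t - v0 t) <=
  ((rho 0 - rho0 0) * (rho 0 - rho0 0) + (v 0 - v0 0) * (v 0 - v0 0) + dG * dG * T) * exp ((2 + L + 4 * M) * T).
Proof.
  intros HT HM HL HdG HG0 HL0 HGG Hin Hd t Ht.
  set (E := fun t => (rho t - rho0 t) * (rho t - rho0 t) + (v t - v0 t) * (v t - v0 t)).
  set (C := 2 + L + 4 * M).
  assert (H := gron nil E (fun t => (v t - v0 t) * (rho t - rho0 t) + (rho t - rho0 t) * (v t - v0 t) +
     ((dd t - dd0 t) * (v t - v0 t) + (v t - v0 t) * (dd t - dd0 t))) 0 t C (dG * dG)
     ltac:(lra) ltac:(unfold C; lra) ltac:(pose proof (sq_nonneg dG); lra)).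
  assert (E t <= (E 0 + dG * dG * (t - 0)) * exp (C * (t - 0))).
  { apply H.
    - intros y Hy. destruct (Hd y ltac:(lra)) as [D1 [D2 [D3 D4]]]. unfold E.
      pose proof (dcont _ _ _ D1). pose proof (dcont _ _ _ D2). pose proof (dcont _ _ _ D3). pose proof (dcont _ _ _ D4).
      repeat ctac.
    - intros y Hy _. destruct (Hd y ltac:(lra)) as [D1 [D2 [D3 D4]]]. split. unfold E. dsolve. ring.
      destruct (Hin y ltac:(lra)) as [I1 [I2 [I3 [I4 [I5 I6]]]]].
      rewrite I5, I6. unfold E.
      set (dr := rho y - rho0 y). set (dv := v y - v0 y).
      assert (K1 : Rabs (G (rho y) - G0 (rho y)) <= dG) by (apply HGG; lra).
      assert (K2 : Rabs (G0 (rho y) - G0 (rho0 y)) <= L * Rabs dr) by (apply HL0; lra).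
      assert (K3 : Rabs (G0 (rho0 y)) <= M) by (apply HG0; lra).
      set (w := 1 - v y * v y). set (w0 := 1 - v0 y * v0 y).
      assert (w01 : 0 <= w <= 1) by (unfold w; nra).
      replace (G (rho y) * w - G0 (rho0 y) * w0) with
        ((G (rho y) - G0 (rho y)) * w + (G0 (rho y) - G0 (rho0 y)) * w + G0 (rho0 y) * (w - w0)) by ring.
      assert (ww : Rabs (w - w0) <= 2 * Rabs dv).
      { unfold w, w0, dv. replace (1 - v y * v y - (1 - v0 y * v0 y)) with (- (v y - v0 y) * (v y + v0 y)) by ring.
        rewrite Rabs_mult, Rabs_Ropp. rewrite (Rabs_right (v y + v0 y)) by lra. 
        pose proof (Rabs_pos (v y - v0 y)). nra. }
      set (q := (G (rho y) - G0 (rho y)) * w + (G0 (rho y) - G0 (rho0 y)) * w + G0 (rho0 y) * (w - w0)).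
      assert (Q : Rabs q <= dG + L * Rabs dr + 2 * M * Rabs dv).
      { unfold q. eapply Rle_trans. apply Rabs_triang. eapply Rle_trans. apply Rplus_le_compat_r. apply Rabs_triang.
        rewrite !Rabs_mult. rewrite (Rabs_right w) by lra.
        pose proof (Rabs_pos (G (rho y) - G0 (rho y))). pose proof (Rabs_pos (G0 (rho y) - G0 (rho0 y))).
        pose proof (Rabs_pos (G0 (rho0 y))). pose proof (Rabs_pos (w - w0)). pose proof (Rabs_pos dv). pose proof (Rabs_pos dr).
        assert (Rabs (G (rho y) - G0 (rho y)) * w <= dG) by nra.
        assert (Rabs (G0 (rho y) - G0 (rho0 y)) * w <= L * Rabs dr) by nra.
        assert (Rabs (G0 (rho0 y)) * Rabs (w - w0) <= M * (2 * Rabs dv)) by (apply Rmult_le_compat; lra).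
        lra. }
      assert (Hq : q * dv <= Rabs q * Rabs dv) by (rewrite <- Rabs_mult; apply Rle_abs).
      set (a := Rabs dr) in *. set (b := Rabs dv) in *.
      assert (a2 : a * a = dr * dr) by (unfold a; rewrite <- Rabs_mult; apply Rabs_right; apply Rle_ge, sq_nonneg).
      assert (b2 : b * b = dv * dv) by (unfold b; rewrite <- Rabs_mult; apply Rabs_right; apply Rle_ge, sq_nonneg).
      assert (drdv : dr * dv <= a * b) by (unfold a, b; rewrite <- Rabs_mult; apply Rle_abs).
      assert (a0 : 0 <= a) by apply Rabs_pos. assert (b0 : 0 <= b) by apply Rabs_pos.
      assert (Rabs q * b <= (dG + L * a + 2 * M * b) * b) by (apply Rmult_le_compat_r; lra).
      assert (2 * (dG * b) <= dG * dG + b * b) by (pose proof (sq_nonneg (dG - b)); nra).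
      assert (2 * (a * b) <= a * a + b * b) by (pose proof (sq_nonneg (a - b)); nra).
      assert (L * (2 * (a * b)) <= L * (a * a + b * b)) by (apply Rmult_le_compat_l; lra).
      assert (0 <= M * (b * b)) by (apply Rmult_le_pos; nra).
      unfold C. replace (dd t) with (dd t) by reflexivity.
      nra. }
  unfold E in H0. replace (t - 0) with t in H0 by ring.
  eapply Rle_trans. apply H0. fold C. apply Rmult_le_compat.
  pose proof (sq_nonneg (rho 0 - rho0 0)). pose proof (sq_nonneg (v 0 - v0 0)). pose proof (sq_nonneg dG).
  assert (0 <= dG * dG * t) by (apply Rmult_le_pos; lra). lra. left; apply exp_pos.
  assert (dG * dG * t <= dG * dG * T) by (apply Rmult_le_compat_l; [apply sq_nonneg|lra]). lra.
  apply exp_le_mono. apply Rmult_le_compat_l. unfold C; lra. lra.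
Qed.

Lemma A_lip phi r e A dA X : phiok phi -> parok r e -> is_A phi r e A dA -> 0 <= X ->
  forall x y, 0 <= x <= X -> 0 <= y <= X ->
  Rabs (A x - A y) <= exp X * Rabs (x - y) /\ Rabs (dA x - dA y) <= exp X * Rabs (x - y).
Proof.
  intros Hp Hpar HA HX.
  assert (W : forall x y, 0 <= x <= y -> y <= X ->
     Rabs (A y - A x) <= exp X * (y - x) /\ Rabs (dA y - dA x) <= exp X * (y - x)).
  { intros x y Hxy HyX. pose proof HA as [_ [_ [DA [CdA DdA]]]]. split.
    - apply (lip_fin nil A dA). lra. intros; apply (A_cont _ _ _ _ _ _ HA).
      intros z Hz _. split; auto. destruct (A_bound phi r e A dA Hp Hpar HA z ltac:(lra)) as [_ Q].
      assert (0 < dA z) by (apply (dA_pos phi r e A dA); auto; lra).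
      rewrite Rabs_right by lra. eapply Rle_trans. apply Q. apply exp_le_mono; lra.
    - apply (lip_fin (r :: nil) dA (fun z => - (Kpar phi r e z * A z))). lra. intros; auto.
      intros z Hz Hn. assert (zr : z <> r) by (intro; apply Hn; simpl; auto). split. apply DdA; auto.
      destruct (A_bound phi r e A dA Hp Hpar HA z ltac:(lra)) as [Q _].
      assert (0 <= A z) by (apply (A_nonneg phi r e A dA); auto; lra).
      pose proof (K_bound phi r e z Hp).
      rewrite Rabs_Ropp, Rabs_mult. assert (Rabs (Kpar phi r e z) <= 1) by (apply Rabs_le; lra).
      rewrite (Rabs_right (A z)) by lra.
      assert (exp z <= exp X) by (apply exp_le_mono; lra).
      pose proof (Rabs_pos (Kpar phi r e z)). nra. }
  intros x y Hx Hy. destruct (Rle_dec x y).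
  - destruct (W x y ltac:(lra) ltac:(lra)). rewrite (Rabs_minus_sym x), (Rabs_right (y - x)) by lra.
    rewrite (Rabs_minus_sym (A x)), (Rabs_minus_sym (dA x)). auto.
  - destruct (W y x ltac:(lra) ltac:(lra)). rewrite (Rabs_right (x - y)) by lra. auto.
Qed.

Lemma G_props phi r e A dA x1 X : phiok phi -> parok r e -> is_A phi r e A dA ->
  0 < x1 <= r -> x1 <= X ->
  (forall x, x1 <= x <= X -> sin x1 <= A x <= exp X /\ 0 < dA x <= exp X) /\
  (forall x, x1 <= x <= X -> Rabs (dA x / A x) <= exp X / sin x1) /\
  (forall x y, x1 <= x <= X -> x1 <= y <= X ->
     Rabs (dA x / A x - dA y / A y) <= (2 * (exp X * exp X) / (sin x1 * sin x1)) * Rabs (x - y)).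
Proof.
  intros Hp Hpar HA Hx1 HX. pose proof Hpar as [r0 [e0 re]].
  assert (s1 : 0 < sin x1) by (apply sin_pos_h; lra).
  assert (B : forall x, x1 <= x <= X -> sin x1 <= A x <= exp X /\ 0 < dA x <= exp X).
  { intros x Hx. destruct (A_bound phi r e A dA Hp Hpar HA x ltac:(lra)) as [Q1 Q2].
    assert (exp x <= exp X) by (apply exp_le_mono; lra).
    split. split. rewrite <- (proj1 (A_sin phi r e A dA Hp Hpar HA x1 ltac:(lra))).
    apply (A_mono phi r e A dA); auto; lra. lra.
    split. apply (dA_pos phi r e A dA); auto; lra. lra. }
  split; auto. split.
  - intros x Hx. destruct (B x Hx) as [[Q1 Q2] [Q3 Q4]].
    rewrite Rabs_right. unfold Rdiv. apply Rmult_le_compat; try lra.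
    left; apply Rinv_0_lt_compat; lra. apply Rinv_le_contravar; lra.
    apply Rle_ge. left. apply Rdiv_lt_0_compat; lra.
  - intros x y Hx Hy. destruct (B x Hx) as [[Q1 Q2] [Q3 Q4]]. destruct (B y Hy) as [[R1 R2] [R3 R4]].
    destruct (A_lip phi r e A dA X Hp Hpar HA ltac:(lra) x y ltac:(lra) ltac:(lra)) as [L1 L2].
    replace (dA x / A x - dA y / A y) with (((dA x - dA y) * A y + dA y * (A y - A x)) / (A x * A y)) by (field; lra).
    unfold Rdiv. rewrite Rabs_mult. rewrite (Rabs_right (/ (A x * A y))) by (left; apply Rinv_0_lt_compat; nra).
    assert (N : Rabs ((dA x - dA y) * A y + dA y * (A y - A x)) <= 2 * (exp X * exp X) * Rabs (x - y)).
    { eapply Rle_trans. apply Rabs_triang. rewrite !Rabs_mult. rewrite (Rabs_right (A y)), (Rabs_right (dA y)) by lra.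
      rewrite (Rabs_minus_sym (A y)).
      pose proof (Rabs_pos (x - y)). pose proof (Rabs_pos (dA x - dA y)). pose proof (Rabs_pos (A x - A y)).
      assert (Rabs (dA x - dA y) * A y <= exp X * Rabs (x - y) * exp X) by (apply Rmult_le_compat; lra).
      assert (dA y * Rabs (A x - A y) <= exp X * (exp X * Rabs (x - y))) by (apply Rmult_le_compat; lra).
      lra. }
    assert (I : / (A x * A y) <= / (sin x1 * sin x1)) by (apply Rinv_le_contravar; nra).
    assert (0 <= / (A x * A y)) by (left; apply Rinv_0_lt_compat; nra).
    replace (2 * (exp X * exp X) * / (sin x1 * sin x1) * Rabs (x - y)) with
      (2 * (exp X * exp X) * Rabs (x - y) * / (sin x1 * sin x1)) by ring.
    apply Rmult_le_compat; auto. apply Rabs_pos.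
Qed.

Lemma G_diff A dA A0 dA0 x1 X eta : 0 < sin x1 ->
  (forall x, x1 <= x <= X -> sin x1 <= A x <= exp X /\ 0 < dA x <= exp X) ->
  (forall x, x1 <= x <= X -> sin x1 <= A0 x <= exp X /\ 0 < dA0 x <= exp X) ->
  (forall x, x1 <= x <= X -> Rabs (A x - A0 x) <= eta /\ Rabs (dA x - dA0 x) <= eta) ->
  forall x, x1 <= x <= X -> Rabs (dA x / A x - dA0 x / A0 x) <= 2 * exp X * eta / (sin x1 * sin x1).
Proof.
  intros s1 HB HB0 Hd x Hx. destruct (HB x Hx) as [[Q1 Q2] [Q3 Q4]]. destruct (HB0 x Hx) as [[R1 R2] [R3 R4]].
  destruct (Hd x Hx) as [D1 D2].
  replace (dA x / A x - dA0 x / A0 x) with (((dA x - dA0 x) * A0 x + dA0 x * (A0 x - A x)) / (A x * A0 x)) by (field; lra).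
  unfold Rdiv. rewrite Rabs_mult. rewrite (Rabs_right (/ (A x * A0 x))) by (left; apply Rinv_0_lt_compat; nra).
  assert (N : Rabs ((dA x - dA0 x) * A0 x + dA0 x * (A0 x - A x)) <= 2 * exp X * eta).
  { eapply Rle_trans. apply Rabs_triang. rewrite !Rabs_mult. rewrite (Rabs_right (A0 x)), (Rabs_right (dA0 x)) by lra.
    rewrite (Rabs_minus_sym (A0 x)).
    pose proof (Rabs_pos (dA x - dA0 x)). pose proof (Rabs_pos (A x - A0 x)).
    assert (Rabs (dA x - dA0 x) * A0 x <= eta * exp X) by (apply Rmult_le_compat; lra).
    assert (dA0 x * Rabs (A x - A0 x) <= exp X * eta) by (apply Rmult_le_compat; lra).
    lra. }
  assert (I : / (A x * A0 x) <= / (sin x1 * sin x1)) by (apply Rinv_le_contravar; nra).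
  assert (0 <= / (A x * A0 x)) by (left; apply Rinv_0_lt_compat; nra).
  apply Rmult_le_compat; auto. apply Rabs_pos.
Qed.

Lemma dd_diff g g0x g0y w w0 dG L M x y :
  0 <= w <= 1 -> Rabs (g - g0x) <= dG -> Rabs (g0x - g0y) <= L * Rabs (x - y) -> Rabs g0y <= M ->
  Rabs (g * w - g0y * w0) <= dG + L * Rabs (x - y) + M * Rabs (w - w0).
Proof.
  intros Hw H1 H2 H3.
  replace (g * w - g0y * w0) with ((g - g0x) * w + (g0x - g0y) * w + g0y * (w - w0)) by ring.
  eapply Rle_trans. apply Rabs_triang. eapply Rle_trans. apply Rplus_le_compat_r. apply Rabs_triang.
  rewrite !Rabs_mult. rewrite (Rabs_right w) by lra.
  pose proof (Rabs_pos (g - g0x)). pose proof (Rabs_pos (g0x - g0y)). pose proof (Rabs_pos (w - w0)).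
  assert (Rabs (g - g0x) * w <= dG) by nra.
  assert (Rabs (g0x - g0y) * w <= L * Rabs (x - y)) by nra.
  assert (Rabs g0y * Rabs (w - w0) <= M * Rabs (w - w0)) by (apply Rmult_le_compat_r; lra).
  lra.
Qed.

Lemma sq_diff_abs v v0 : 0 <= v <= 1 -> 0 <= v0 <= 1 ->
  Rabs ((1 - v * v) - (1 - v0 * v0)) <= 2 * Rabs (v - v0).
Proof.
  intros. replace ((1 - v * v) - (1 - v0 * v0)) with (- (v - v0) * (v + v0)) by ring.
  rewrite Rabs_mult, Rabs_Ropp, (Rabs_right (v + v0)) by lra.
  pose proof (Rabs_pos (v - v0)). nra.
Qed.

Definition setting phi eta eps0 (A dA : R -> R -> R -> R) (rho drho ddrho : R -> R -> R -> R -> R) :=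
  phiok phi /\ smooth phi /\ 0 < eta /\ 0 < eps0 /\ PI / 4 + eta + eps0 < PI / 2 /\
  (forall r e, PI / 4 - eta <= r <= PI / 4 + eta -> 0 <= e <= eps0 -> is_A phi r e (A r e) (dA r e)) /\
  (forall s r e, 0 <= s -> PI / 4 - eta <= r <= PI / 4 + eta -> 0 <= e <= eps0 ->
     is_rho (A r e) (dA r e) s (rho s r e) (drho s r e) (ddrho s r e)).

Lemma setting_par phi eta eps0 A dA rho drho ddrho :
  setting phi eta eps0 A dA rho drho ddrho ->
  0 < Rmin 1 (PI / 4 - eta) <= 1 /\
  forall r e, PI / 4 - eta <= r <= PI / 4 + eta -> 0 <= e <= eps0 ->
    parok r e /\ Rmin 1 (PI / 4 - eta) <= r.
Proof.
  intros [Hp [Hs [He [He0 [Hsm _]]]]]. split.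
  - split. apply Rmin_glb_lt; lra. apply Rmin_l.
  - intros r e Hr Hee. split. unfold parok. lra. pose proof (Rmin_r 1 (PI / 4 - eta)). lra.
Qed.

Lemma rho_lip1 phi r e A dA s rho drho ddrho :
  phiok phi -> parok r e -> is_A phi r e A dA -> 0 < s -> is_rho A dA s rho drho ddrho ->
  forall t t', 0 <= t -> 0 <= t' -> Rabs (rho t - rho t') <= Rabs (t - t').
Proof.
  intros. destruct (Rle_dec t t').
  - destruct (rho_mono phi r e A dA s rho drho ddrho H H0 H1 H2 H3 t t' ltac:(lra)).
    rewrite Rabs_minus_sym, Rabs_right by lra. rewrite Rabs_minus_sym, Rabs_right by lra. lra.
  - destruct (rho_mono phi r e A dA s rho drho ddrho H H0 H1 H2 H3 t' t ltac:(lra)).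
    rewrite Rabs_right by lra. rewrite Rabs_right by lra. lra.
Qed.

Lemma lip_sym f df a b k :
  (forall x, a <= x <= b -> continuity_pt f x) ->
  (forall x, a < x < b -> derivable_pt_lim f x (df x) /\ Rabs (df x) <= k) ->
  forall x y, a <= x <= b -> a <= y <= b -> Rabs (f x - f y) <= k * Rabs (x - y).
Proof.
  intros Hc Hd x y Hx Hy. destruct (Rle_dec x y).
  - rewrite Rabs_minus_sym, (Rabs_minus_sym x), (Rabs_right (y - x)) by lra.
    apply (lip_fin nil f df x y k). lra. intros; apply Hc; lra. intros z Hz _; apply Hd; lra.
  - rewrite (Rabs_right (x - y)) by lra.
    apply (lip_fin nil f df y x k). lra. intros; apply Hc; lra. intros z Hz _; apply Hd; lra.
Qed.

Lemma near_pos phi eta eps0 A dA rho drho ddrho :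
  setting phi eta eps0 A dA rho drho ddrho ->
  forall t0 s0 r0 e0, Dom1 eta eps0 t0 s0 r0 e0 -> 0 < s0 ->
  forall eps, 0 < eps -> exists del, 0 < del /\
  forall t s r e, Dom1 eta eps0 t s r e ->
    Rabs (t - t0) < del -> Rabs (s - s0) < del -> Rabs (r - r0) < del -> Rabs (e - e0) < del ->
    Rabs (rho s r e t - rho s0 r0 e0 t0) < eps /\
    Rabs (drho s r e t - drho s0 r0 e0 t0) < eps /\
    Rabs (ddrho s r e t - ddrho s0 r0 e0 t0) < eps.
Proof.
  intros Hset t0 s0 r0 e0 [Ht0 [Hs0 [Hr0 He0]]] s0p eps Heps.
  destruct (setting_par _ _ _ _ _ _ _ _ Hset) as [Hrm Hpar].
  pose proof Hset as [Hp [Hsm [Heta [Heps0 [Hsmall [HA Hrho]]]]]].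
  set (rm := Rmin 1 (PI / 4 - eta)) in *.
  destruct (Hpar r0 e0 Hr0 He0) as [P0 rm0].
  set (T := t0 + 1). set (x1 := Rmin (s0 / 2) rm). set (X := 2 * s0 + T).
  assert (x1p : 0 < x1) by (unfold x1; apply Rmin_glb_lt; lra).
  assert (x1s : x1 <= s0 / 2) by apply Rmin_l. assert (x1r : x1 <= rm) by apply Rmin_r.
  assert (x1X : x1 <= X) by (unfold X, T; lra).
  set (B := exp X). set (a1 := sin x1).
  assert (a1p : 0 < a1) by (unfold a1; apply sin_pos_h; pose proof PI2_1; lra).
  assert (B0 : 0 < B) by apply exp_pos.
  set (M := B / a1). set (L := 2 * (B * B) / (a1 * a1)).
  assert (M0 : 0 <= M) by (unfold M; left; apply Rdiv_lt_0_compat; lra).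
  assert (L0 : 0 <= L) by (unfold L; left; apply Rdiv_lt_0_compat; nra).
  destruct (G_props phi r0 e0 (A r0 e0) (dA r0 e0) x1 X Hp P0 (HA r0 e0 Hr0 He0) ltac:(lra) x1X)
    as [GB0 [GM0 GL0]].
  set (eps1 := eps / (2 * (1 + L + 2 * M))).
  assert (e1p : 0 < eps1) by (unfold eps1; apply Rdiv_lt_0_compat; lra).
  assert (e1e : eps1 * (1 + L + 2 * M) = eps / 2) by (unfold eps1; field; lra).
  set (epsp := eps1 / 2).
  set (C := 2 + L + 4 * M). set (eC := exp (C * T)).
  assert (eC0 : 0 < eC) by apply exp_pos.
  set (kap := Rmin (Rmin 1 eps1) (epsp * epsp / (2 * eC * (T + 1)))).
  assert (kp : 0 < kap).
  { unfold kap. apply Rmin_glb_lt. apply Rmin_glb_lt; lra. apply Rdiv_lt_0_compat. unfold epsp; nra.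
    unfold T; nra. }
  assert (k1 : kap <= 1) by (unfold kap; eapply Rle_trans; [apply Rmin_l|apply Rmin_l]).
  assert (k2 : kap <= eps1) by (unfold kap; eapply Rle_trans; [apply Rmin_l|apply Rmin_r]).
  assert (k3 : kap <= epsp * epsp / (2 * eC * (T + 1))) by (unfold kap; apply Rmin_r).
  set (eta' := kap * (a1 * a1) / (2 * B)).
  assert (eta'p : 0 < eta') by (unfold eta'; apply Rdiv_lt_0_compat; [apply Rmult_lt_0_compat; [lra| apply Rmult_lt_0_compat; lra] | lra]).
  destruct (A_parcont phi r0 e0 X Hp Hsm P0 ltac:(unfold X, T; lra) eta' eta'p) as [d1 [d1p Hd1]].
  set (del := Rmin (Rmin (Rmin 1 (s0 / 2)) (Rmin kap d1)) (epsp / (1 + M))).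
  assert (dp : 0 < del).
  { unfold del. repeat apply Rmin_glb_lt; try lra. apply Rdiv_lt_0_compat; unfold epsp; lra. }
  exists del. split; auto.
  intros t s r e [Ht [Hs [Hr He]]] Dt Ds Dr De.
  assert (dl1 : del <= 1) by (unfold del; repeat (eapply Rle_trans; [apply Rmin_l|]); lra).
  assert (dl2 : del <= s0 / 2) by (unfold del; eapply Rle_trans; [apply Rmin_l|]; eapply Rle_trans; [apply Rmin_l|]; apply Rmin_r).
  assert (dl3 : del <= kap) by (unfold del; eapply Rle_trans; [apply Rmin_l|]; eapply Rle_trans; [apply Rmin_r|]; apply Rmin_l).
  assert (dl4 : del <= d1) by (unfold del; eapply Rle_trans; [apply Rmin_l|]; eapply Rle_trans; [apply Rmin_r|]; apply Rmin_r).
  assert (dl5 : del <= epsp / (1 + M)) by (unfold del; apply Rmin_r).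
  apply Rabs_lt_between in Dt as Dt'. apply Rabs_lt_between in Ds as Ds'.
  assert (sp : 0 < s) by lra.
  destruct (Hpar r e Hr He) as [P1 rm1].
  assert (HAp := HA r e Hr He). assert (HA0 := HA r0 e0 Hr0 He0).
  assert (Hrp := Hrho s r e Hs Hr He). assert (Hr0p := Hrho s0 r0 e0 Hs0 Hr0 He0).
  destruct (G_props phi r e (A r e) (dA r e) x1 X Hp P1 HAp ltac:(lra) x1X) as [GB1 _].
  assert (Close := Hd1 r e (A r e) (dA r e) (A r0 e0) (dA r0 e0) P1 ltac:(lra) ltac:(lra) HAp HA0).
  assert (GD := G_diff (A r e) (dA r e) (A r0 e0) (dA r0 e0) x1 X eta' a1p GB1 GB0
     (fun x Hx => Close x ltac:(lra))).
  assert (dGe : 2 * exp X * eta' / (sin x1 * sin x1) = kap) by (fold B a1; unfold eta'; field; lra).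
  rewrite dGe in GD.
  assert (Bas := rho_basic phi r e (A r e) (dA r e) s (rho s r e) (drho s r e) (ddrho s r e) Hp P1 HAp sp Hrp).
  assert (Bas0 := rho_basic phi r0 e0 (A r0 e0) (dA r0 e0) s0 (rho s0 r0 e0) (drho s0 r0 e0) (ddrho s0 r0 e0) Hp P0 HA0 s0p Hr0p).
  assert (Mon := rho_mono phi r e (A r e) (dA r e) s (rho s r e) (drho s r e) (ddrho s r e) Hp P1 HAp sp Hrp).
  assert (Mon0 := rho_mono phi r0 e0 (A r0 e0) (dA r0 e0) s0 (rho s0 r0 e0) (drho s0 r0 e0) (ddrho s0 r0 e0) Hp P0 HA0 s0p Hr0p).
  pose proof Hrp as [Dr1 [Dv1 [Ho1 _]]]. destruct (Ho1 sp) as [i1 [i2 _]].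
  pose proof Hr0p as [Dr0 [Dv0 [Ho0 _]]]. destruct (Ho0 s0p) as [j1 [j2 _]].
  assert (Hin : forall t', 0 <= t' <= T ->
     x1 <= rho s r e t' <= X /\ x1 <= rho s0 r0 e0 t' <= X /\ 0 <= drho s r e t' <= 1 /\ 0 <= drho s0 r0 e0 t' <= 1 /\
     ddrho s r e t' = dA r e (rho s r e t') / A r e (rho s r e t') * (1 - drho s r e t' * drho s r e t') /\
     ddrho s0 r0 e0 t' = dA r0 e0 (rho s0 r0 e0 t') / A r0 e0 (rho s0 r0 e0 t') * (1 - drho s0 r0 e0 t' * drho s0 r0 e0 t')).
  { intros t' Ht'. destruct (Bas t' ltac:(lra)) as [b1 [b2 [b3 b4]]]. destruct (Bas0 t' ltac:(lra)) as [c1 [c2 [c3 c4]]].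
    destruct (Mon 0 t' ltac:(lra)) as [_ m1]. destruct (Mon0 0 t' ltac:(lra)) as [_ m2].
    rewrite i1 in m1. rewrite j1 in m2. unfold X. repeat split; auto; lra. }
  assert (RG := rho_gron (fun x => dA r e x / A r e x) (fun x => dA r0 e0 x / A r0 e0 x)
     (rho s r e) (drho s r e) (ddrho s r e) (rho s0 r0 e0) (drho s0 r0 e0) (ddrho s0 r0 e0) x1 X T M L kap
     ltac:(unfold T; lra) M0 L0 ltac:(lra) GM0 GL0 GD Hin
     (fun t' Ht' => conj (Dr1 t' Ht') (conj (Dv1 t' Ht') (conj (Dr0 t' Ht') (Dv0 t' Ht'))))).
  fold C in RG.
  assert (tT : 0 <= t <= T) by (unfold T; lra). assert (t0T : 0 <= t0 <= T) by (unfold T; lra).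
  specialize (RG t tT). rewrite i1, i2, j1, j2 in RG. fold eC in RG.
  assert (Ebound : ((s - s0) * (s - s0) + (0 - 0) * (0 - 0) + kap * kap * T) * eC <= epsp * epsp).
  { assert ((s - s0) * (s - s0) <= kap).
    { assert (Rabs (s - s0) <= kap) by lra. assert (Rabs (s - s0) * Rabs (s - s0) <= kap * kap) by (apply Rmult_le_compat; try apply Rabs_pos; lra).
      rewrite <- Rabs_mult, Rabs_right in H0 by (apply Rle_ge, sq_nonneg). nra. }
    assert (kap * kap * T <= kap * T) by (apply Rmult_le_compat_r; unfold T; nra).
    assert (kap * (T + 1) * (2 * eC) <= epsp * epsp).
    { apply (Rmult_le_compat_r (2 * eC * (T + 1))) in k3; [|unfold T; nra].
      replace (epsp * epsp / (2 * eC * (T + 1)) * (2 * eC * (T + 1))) with (epsp * epsp) in k3 by (field; unfold T; lra).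
      lra. }
    assert (((s - s0) * (s - s0) + (0 - 0) * (0 - 0) + kap * kap * T) <= kap * (T + 1)) by lra.
    assert (0 <= kap * (T + 1) * eC) by (apply Rmult_le_pos; unfold T; nra).
    nra. }
  assert (R1 : Rabs (rho s r e t - rho s0 r0 e0 t) <= epsp).
  { apply abs_of_sq. unfold epsp; lra. pose proof (sq_nonneg (drho s r e t - drho s0 r0 e0 t)). lra. }
  assert (R2 : Rabs (drho s r e t - drho s0 r0 e0 t) <= epsp).
  { apply abs_of_sq. unfold epsp; lra. pose proof (sq_nonneg (rho s r e t - rho s0 r0 e0 t)). lra. }
  assert (R3 : Rabs (rho s0 r0 e0 t - rho s0 r0 e0 t0) < epsp).
  { eapply Rle_lt_trans. apply (rho_lip1 phi r0 e0 (A r0 e0) (dA r0 e0) s0 (rho s0 r0 e0) (drho s0 r0 e0) (ddrho s0 r0 e0)); auto.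
    assert (del <= epsp) by (eapply Rle_trans; [apply dl5|]; apply Rcomplements.Rle_div_l; unfold epsp; nra). lra. }
  assert (R4 : Rabs (drho s0 r0 e0 t - drho s0 r0 e0 t0) < epsp).
  { assert (LV : Rabs (drho s0 r0 e0 t - drho s0 r0 e0 t0) <= M * Rabs (t - t0)).
    { apply (lip_sym (drho s0 r0 e0) (ddrho s0 r0 e0) 0 T); auto.
      intros y Hy. apply (dcont _ _ _ (Dv0 y ltac:(lra))).
      intros y Hy. split. apply Dv0; lra. destruct (Hin y ltac:(lra)) as [_ [Q1 [_ [Q2 [_ Q3]]]]].
      rewrite Q3, Rabs_mult. assert (Rabs (dA r0 e0 (rho s0 r0 e0 y) / A r0 e0 (rho s0 r0 e0 y)) <= M) by (apply GM0; lra).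
      rewrite (Rabs_right (1 - _)) by nra. pose proof (Rabs_pos (dA r0 e0 (rho s0 r0 e0 y) / A r0 e0 (rho s0 r0 e0 y))). nra. }
    assert (M * Rabs (t - t0) <= M * del) by (apply Rmult_le_compat_l; lra).
    assert (M * del < epsp).
    { apply (Rmult_le_compat_r (1 + M)) in dl5; [|lra].
      replace (epsp / (1 + M) * (1 + M)) with epsp in dl5 by (field; lra). nra. }
    lra. }
  assert (Ra : Rabs (rho s r e t - rho s0 r0 e0 t0) < eps1).
  { replace (rho s r e t - rho s0 r0 e0 t0) with ((rho s r e t - rho s0 r0 e0 t) + (rho s0 r0 e0 t - rho s0 r0 e0 t0)) by ring.
    eapply Rle_lt_trans. apply Rabs_triang. unfold epsp in *; lra. }
  assert (Rb : Rabs (drho s r e t - drho s0 r0 e0 t0) < eps1).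
  { replace (drho s r e t - drho s0 r0 e0 t0) with ((drho s r e t - drho s0 r0 e0 t) + (drho s0 r0 e0 t - drho s0 r0 e0 t0)) by ring.
    eapply Rle_lt_trans. apply Rabs_triang. unfold epsp in *; lra. }
  assert (e1le : eps1 <= eps / 2) by (rewrite <- e1e; nra).
  split; [lra|]. split; [lra|].
  destruct (Hin t tT) as [I1 [I2 [I3 [I4 [I5 I6]]]]]. destruct (Hin t0 t0T) as [J1 [J2 [J3 [J4 [J5 J6]]]]].
  rewrite I5, J6.
  assert (DD := dd_diff (dA r e (rho s r e t) / A r e (rho s r e t)) (dA r0 e0 (rho s r e t) / A r0 e0 (rho s r e t))
     (dA r0 e0 (rho s0 r0 e0 t0) / A r0 e0 (rho s0 r0 e0 t0))
     (1 - drho s r e t * drho s r e t) (1 - drho s0 r0 e0 t0 * drho s0 r0 e0 t0) kap L M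
     (rho s r e t) (rho s0 r0 e0 t0) ltac:(nra) (GD _ I1) (GL0 _ _ I1 J2) (GM0 _ J2)).
  pose proof (sq_diff_abs (drho s r e t) (drho s0 r0 e0 t0) I3 J4).
  assert (L * Rabs (rho s r e t - rho s0 r0 e0 t0) <= L * eps1) by (apply Rmult_le_compat_l; lra).
  assert (M * Rabs (1 - drho s r e t * drho s r e t - (1 - drho s0 r0 e0 t0 * drho s0 r0 e0 t0)) <= M * (2 * eps1)) by (apply Rmult_le_compat_l; lra).
  lra.
Qed.

Lemma s0_derivs A dA rho drho ddrho : is_rho A dA 0 rho drho ddrho ->
  (forall t, 0 <= t -> rho t = t /\ drho t = 1) /\ (forall t, 0 < t -> ddrho t = 0).
Proof.
  intros [Dr [Dv [_ H0]]]. specialize (H0 eq_refl).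
  assert (E : rho = fun t => t) by (apply functional_extensionality; auto).
  assert (D1 : forall t, 0 <= t -> drho t = 1).
  { intros t Ht. specialize (Dr t Ht). rewrite E in Dr. apply (uniqueness_limite (fun t => t) t); auto. apply did. }
  split. intros t Ht; split; auto.
  intros t Ht. apply (uniqueness_limite drho t). apply Dv; lra.
  intros eps Heps. exists (mkposreal t Ht). intros h Hh Hht. simpl in Hht.
  apply Rabs_lt_between in Hht as Q. rewrite !D1 by lra.
  replace ((1 - 1) / h - 0) with 0 by (field; auto). rewrite Rabs_R0. auto.
Qed.

Lemma near_zero_rho phi eta eps0 A dA rho drho ddrho :
  setting phi eta eps0 A dA rho drho ddrho ->
  forall t0 r0 e0, Dom1 eta eps0 t0 0 r0 e0 ->
  forall eps, 0 < eps -> exists del, 0 < del /\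
  forall t s r e, Dom1 eta eps0 t s r e ->
    Rabs (t - t0) < del -> Rabs (s - 0) < del -> Rabs (r - r0) < del -> Rabs (e - e0) < del ->
    Rabs (rho s r e t - rho 0 r0 e0 t0) < eps.
Proof.
  intros Hset t0 r0 e0 [Ht0 [_ [Hr0 He0]]] eps Heps.
  destruct (setting_par _ _ _ _ _ _ _ _ Hset) as [Hrm Hpar].
  pose proof Hset as [Hp [Hsm [Heta [Heps0 [Hsmall [HA Hrho]]]]]].
  set (rm := Rmin 1 (PI / 4 - eta)) in *.
  destruct (rho_small phi rm Hp Hrm (t0 + 1) (eps / 2) ltac:(lra) ltac:(lra)) as [ds [dsp Hds]].
  exists (Rmin (Rmin 1 (eps / 2)) ds). split. repeat apply Rmin_glb_lt; lra.
  intros t s r e [Ht [Hs [Hr He]]] Dt Ds Dr De.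
  assert (d1 : Rmin (Rmin 1 (eps / 2)) ds <= 1) by (eapply Rle_trans; [apply Rmin_l|apply Rmin_l]).
  assert (d2 : Rmin (Rmin 1 (eps / 2)) ds <= eps / 2) by (eapply Rle_trans; [apply Rmin_l|apply Rmin_r]).
  assert (d3 : Rmin (Rmin 1 (eps / 2)) ds <= ds) by apply Rmin_r.
  destruct (s0_derivs _ _ _ _ _ (Hrho 0 r0 e0 ltac:(lra) Hr0 He0)) as [Q _]. rewrite (proj1 (Q t0 Ht0)); clear Q.
  apply Rabs_lt_between in Dt as Dt'. rewrite Rminus_0_r in Ds. apply Rabs_lt_between in Ds as Ds'.
  destruct Hs as [Hs|Hs].
  - destruct (Hpar r e Hr He) as [P1 rm1].
    assert (H := Hds r e (A r e) (dA r e) s (rho s r e) (drho s r e) (ddrho s r e) P1 rm1 (HA r e Hr He)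
       ltac:(lra) (Hrho s r e ltac:(lra) Hr He) t ltac:(lra)).
    replace (rho s r e t - t0) with ((rho s r e t - t) + (t - t0)) by ring.
    eapply Rle_lt_trans. apply Rabs_triang. lra.
  - subst s. destruct (s0_derivs _ _ _ _ _ (Hrho 0 r e ltac:(lra) Hr He)) as [Q _].
    rewrite (proj1 (Q t Ht)). lra.
Qed.

Lemma near_zero_d phi eta eps0 A dA rho drho ddrho :
  setting phi eta eps0 A dA rho drho ddrho ->
  forall t0 r0 e0, Dom1 eta eps0 t0 0 r0 e0 -> 0 < t0 ->
  forall eps, 0 < eps -> exists del, 0 < del /\
  forall t s r e, Dom1 eta eps0 t s r e ->
    Rabs (t - t0) < del -> Rabs (s - 0) < del -> Rabs (r - r0) < del -> Rabs (e - e0) < del ->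
    Rabs (drho s r e t - drho 0 r0 e0 t0) < eps /\ Rabs (ddrho s r e t - ddrho 0 r0 e0 t0) < eps.
Proof.
  intros Hset t0 r0 e0 [Ht0 [_ [Hr0 He0]]] t0p eps Heps.
  destruct (setting_par _ _ _ _ _ _ _ _ Hset) as [Hrm Hpar].
  pose proof Hset as [Hp [Hsm [Heta [Heps0 [Hsmall [HA Hrho]]]]]].
  set (rm := Rmin 1 (PI / 4 - eta)) in *.
  destruct (s0_derivs _ _ _ _ _ (Hrho 0 r0 e0 ltac:(lra) Hr0 He0)) as [Q1 Q2].
  rewrite (proj2 (Q1 t0 Ht0)), (Q2 t0 t0p). clear Q1 Q2.
  destruct (rho_small phi rm Hp Hrm (t0 + 1) (t0 / 4) ltac:(lra) ltac:(lra)) as [ds [dsp Hds]].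
  set (m0 := Rmin (t0 / 4) rm).
  assert (m0p : 0 < m0) by (unfold m0; apply Rmin_glb_lt; lra).
  assert (m01 : m0 <= 1) by (unfold m0; pose proof (Rmin_r (t0 / 4) rm); lra).
  assert (m0t : m0 <= t0 / 4) by apply Rmin_l. assert (m0r : m0 <= rm) by apply Rmin_r.
  set (X := t0 + 3). set (B := exp X). assert (B0 : 0 < B) by apply exp_pos.
  set (sgm := Rmin rm (eps * (m0 * m0 * m0) / (8 * (B + 1)))).
  assert (sgmp : 0 < sgm).
  { unfold sgm. apply Rmin_glb_lt. lra. apply Rdiv_lt_0_compat. repeat apply Rmult_lt_0_compat; lra. lra. }
  set (del := Rmin (Rmin (t0 / 2) ds) sgm).
  assert (dp : 0 < del). unfold del. apply Rmin_glb_lt. apply Rmin_glb_lt. clear -t0p; lra. lra. lra.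
  exists del. split; auto.
  intros t s r e [Ht [Hs [Hr He]]] Dt Ds Dr De.
  assert (d1 : del <= t0 / 2) by (unfold del; eapply Rle_trans; [apply Rmin_l|apply Rmin_l]).
  assert (d2 : del <= ds) by (unfold del; eapply Rle_trans; [apply Rmin_l|apply Rmin_r]).
  assert (d3 : del <= sgm) by (unfold del; apply Rmin_r).
  assert (s1 : sgm <= rm) by apply Rmin_l.
  assert (s2 : sgm <= eps * (m0 * m0 * m0) / (8 * (B + 1))) by apply Rmin_r.
  apply Rabs_lt_between in Dt as Dt'. rewrite Rminus_0_r in Ds. apply Rabs_lt_between in Ds as Ds'.
  assert (tp : 0 < t) by lra.
  destruct Hs as [Hs|Hs].
  - destruct (Hpar r e Hr He) as [P1 rm1].
    assert (HAp := HA r e Hr He). assert (Hrp := Hrho s r e ltac:(lra) Hr He).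
    assert (H := Hds r e (A r e) (dA r e) s (rho s r e) (drho s r e) (ddrho s r e) P1 rm1 HAp
       ltac:(lra) Hrp t ltac:(lra)).
    apply Rabs_le_between in H.
    destruct (rho_basic phi r e (A r e) (dA r e) s (rho s r e) (drho s r e) (ddrho s r e) Hp P1 HAp Hs Hrp t ltac:(lra))
      as [b1 [b2 [b3 b4]]].
    destruct (rho_mono phi r e (A r e) (dA r e) s (rho s r e) (drho s r e) (ddrho s r e) Hp P1 HAp Hs Hrp 0 t ltac:(lra))
      as [_ mm]. pose proof Hrp as [_ [_ [Ho _]]]. rewrite (proj1 (Ho Hs)) in mm.
    set (x := rho s r e t) in *. set (v := drho s r e t) in *.
    assert (xm : m0 <= x) by lra.
    assert (Ax : m0 / 2 <= A r e x).
    { destruct (A_sin phi r e (A r e) (dA r e) Hp P1 HAp m0 ltac:(lra)) as [E1 _].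
      assert (A r e m0 <= A r e x) by (apply (A_mono phi r e (A r e) (dA r e)); auto; lra).
      pose proof (sin_lb2 m0 ltac:(lra)). lra. }
    destruct (A_sin phi r e (A r e) (dA r e) Hp P1 HAp s ltac:(lra)) as [E2 _]. rewrite E2 in b3.
    pose proof (sin_le_x s ltac:(lra)). assert (0 < sin s) by (apply sin_pos_h; pose proof PI2_1; lra).
    assert (w0 : 0 <= 1 - v * v) by nra.
    assert (W1 : (1 - v * v) * (m0 * m0) <= 4 * (s * s)).
    { assert (m0 * m0 <= 4 * (A r e x * A r e x)) by nra.
      assert ((1 - v * v) * (m0 * m0) <= (1 - v * v) * (4 * (A r e x * A r e x))) by (apply Rmult_le_compat_l; lra).
      nra. }
    assert (sB : s * (8 * (B + 1)) < eps * (m0 * m0 * m0)).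
    { assert (s < eps * (m0 * m0 * m0) / (8 * (B + 1))) by lra.
      apply (Rmult_lt_compat_r (8 * (B + 1))) in H2; [|lra].
      replace (eps * (m0 * m0 * m0) / (8 * (B + 1)) * (8 * (B + 1))) with (eps * (m0 * m0 * m0)) in H2 by (field; lra). lra. }
    assert (ss : s * s <= s) by nra.
    assert (m3 : m0 * m0 * m0 <= m0 * m0) by (assert (0 < m0 * m0) by nra; nra).
    assert (Wq : 1 - v * v < eps / 2).
    { assert (4 * (s * s) < eps / 2 * (m0 * m0)) by nra.
      assert (0 < m0 * m0) by nra. nra. }
    split.
    + rewrite Rabs_left1 by lra. nra.
    + assert (dx : dA r e x <= B).
      { destruct (A_bound phi r e (A r e) (dA r e) Hp P1 HAp x ltac:(lra)) as [_ Q].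
        assert (exp x <= B) by (apply exp_le_mono; unfold X; lra). lra. }
      assert (dx0 : 0 < dA r e x) by (apply (dA_pos phi r e (A r e) (dA r e)); auto; lra).
      set (dd := ddrho s r e t) in *.
      assert (Ddef : dd * A r e x = dA r e x * (1 - v * v)) by (rewrite b4; field; lra).
      assert (dd0 : 0 <= dd) by (rewrite b4; apply Rmult_le_pos; [left; apply Rdiv_lt_0_compat; lra|lra]).
      assert (K1 : dd * (m0 / 2) <= B * (1 - v * v)).
      { assert (dd * (m0 / 2) <= dd * A r e x) by (apply Rmult_le_compat_l; lra).
        assert (dA r e x * (1 - v * v) <= B * (1 - v * v)) by (apply Rmult_le_compat_r; lra). lra. }
      assert (K2 : dd * (m0 / 2) * (m0 * m0) <= B * (4 * (s * s))).
      { assert (dd * (m0 / 2) * (m0 * m0) <= B * (1 - v * v) * (m0 * m0)) by (apply Rmult_le_compat_r; nra).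
        assert (B * ((1 - v * v) * (m0 * m0)) <= B * (4 * (s * s))) by (apply Rmult_le_compat_l; lra). nra. }
      assert (K3 : B * (4 * (s * s)) < eps * (m0 * m0 * m0) / 2) by nra.
      rewrite Rminus_0_r, Rabs_right by lra.
      assert (0 < m0 * m0 * m0) by (repeat apply Rmult_lt_0_compat; lra). nra.
  - subst s. destruct (s0_derivs _ _ _ _ _ (Hrho 0 r e ltac:(lra) Hr He)) as [Q1 Q2].
    rewrite (proj2 (Q1 t ltac:(lra))), (Q2 t tp). rewrite !Rminus_diag, Rabs_R0. lra.
Qed.

Theorem lemma3p10
  (phi : R -> R)
  (Hphi_smooth : smooth phi)
  (Hphi_bd : forall x, 0 <= phi x <= 1)
  (Hphi_0 : forall x, x <= 0 -> phi x = 0)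
  (Hphi_1 : forall x, 1 <= x -> phi x = 1)
  (eta eps0 : R) (Heta : 0 < eta) (Heps0 : 0 < eps0)
  (Hsmall : PI / 4 + eta + eps0 < PI / 2)
  (A dA : R -> R -> R -> R)
  (HA : forall r e, PI / 4 - eta <= r <= PI / 4 + eta -> 0 <= e <= eps0 ->
          is_A phi r e (A r e) (dA r e))
  (rho drho ddrho : R -> R -> R -> R -> R)
  (Hrho : forall s r e, 0 <= s -> PI / 4 - eta <= r <= PI / 4 + eta -> 0 <= e <= eps0 ->
          is_rho (A r e) (dA r e) s (rho s r e) (drho s r e) (ddrho s r e)) :
  cont4_on (Dom1 eta eps0) (fun t s r e => rho s r e t) /\
  cont4_on (Dom2 eta eps0) (fun t s r e => drho s r e t) /\
  cont4_on (Dom2 eta eps0) (fun t s r e => ddrho s r e t).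
Proof.
  assert (Hset : setting phi eta eps0 A dA rho drho ddrho).
  { exact (conj (conj Hphi_bd (conj Hphi_0 Hphi_1)) (conj Hphi_smooth (conj Heta (conj Heps0 (conj Hsmall (conj HA Hrho)))))). }
  split; [|split].
  - intros t s r e HD eps Heps. pose proof HD as [Ht [Hs _]].
    destruct Hs as [Hs|Hs].
    + destruct (near_pos _ _ _ _ _ _ _ _ Hset t s r e HD Hs eps Heps) as [d [dp Hd]].
      exists d. split; [exact dp|]. intros t' s' r' e' HD' D1 D2 D3 D4. apply (Hd t' s' r' e' HD' D1 D2 D3 D4).
    + subst s. destruct (near_zero_rho _ _ _ _ _ _ _ _ Hset t r e HD eps Heps) as [d [dp Hd]].
      exists d. split; [exact dp|]. intros t' s' r' e' HD' D1 D2 D3 D4. apply (Hd t' s' r' e' HD' D1 D2 D3 D4).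
  - intros t s r e [HD Hn] eps Heps. pose proof HD as [Ht [Hs _]].
    destruct Hs as [Hs|Hs].
    + destruct (near_pos _ _ _ _ _ _ _ _ Hset t s r e HD Hs eps Heps) as [d [dp Hd]].
      exists d. split; [exact dp|]. intros t' s' r' e' [HD' _] D1 D2 D3 D4. apply (Hd t' s' r' e' HD' D1 D2 D3 D4).
    + subst s. assert (tp : 0 < t) by (destruct Ht; auto; exfalso; apply Hn; auto).
      destruct (near_zero_d _ _ _ _ _ _ _ _ Hset t r e HD tp eps Heps) as [d [dp Hd]].
      exists d. split; [exact dp|]. intros t' s' r' e' [HD' _] D1 D2 D3 D4. apply (Hd t' s' r' e' HD' D1 D2 D3 D4).
  - intros t s r e [HD Hn] eps Heps. pose proof HD as [Ht [Hs _]].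
    destruct Hs as [Hs|Hs].
    + destruct (near_pos _ _ _ _ _ _ _ _ Hset t s r e HD Hs eps Heps) as [d [dp Hd]].
      exists d. split; [exact dp|]. intros t' s' r' e' [HD' _] D1 D2 D3 D4. apply (Hd t' s' r' e' HD' D1 D2 D3 D4).
    + subst s. assert (tp : 0 < t) by (destruct Ht; auto; exfalso; apply Hn; auto).
      destruct (near_zero_d _ _ _ _ _ _ _ _ Hset t r e HD tp eps Heps) as [d [dp Hd]].
      exists d. split; [exact dp|]. intros t' s' r' e' [HD' _] D1 D2 D3 D4. apply (Hd t' s' r' e' HD' D1 D2 D3 D4).
Qed.
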